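(* Let $R>1$ and let $f$ be analytic in a neighborhood of $\Omega_R=\{z\in\mathbb{C}: 1\le |z|\le R,\ \Im z\ge 0\}$. Let $\rho>0$ and suppose that for some constant $C_0>0$, $|f(x)|\le C_0|x|^\rho$ for all $x\in\mathbb{R}\cap\Omega_R$. Set $M=\max_{|z|=1,\, z\in\Omega_R}|f(z)|$ and $$A(R)=\max\Big(C_0R^\rho,\ MR^\rho,\ \max_{z\in\Omega_R}\Re f(z)\Big).$$ Then if $1<r<R$ and $z\in\Omega_R$ with $|z|=r$, we have $|f(z)|\le \frac{2r^\rho}{R^\rho-r^\rho}A(R)$. *)

(* Defs.v *)
From Stdlib Require Export Reals.
From Coquelicot Require Export Coquelicot.
Open Scope R_scope.

Definition Omega (Rr : R) (z : C) : Prop :=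
  1 <= Cmod z <= Rr /\ 0 <= Im z.

(* complex differentiability at z (derivative taken with complex scalars) *)
Definition C_differentiable (f : C -> C) (z : C) : Prop :=
  @ex_derive C_AbsRing C_NormedModule f z.

Definition analytic_near (f : C -> C) (S : C -> Prop) : Prop :=
  exists U : C -> Prop, @open C_UniformSpace U /\
    (forall z, S z -> U z) /\ (forall z, U z -> C_differentiable f z).

Definition is_max_on (S : C -> Prop) (g : C -> R) (m : R) : Prop :=
  (exists z0, S z0 /\ g z0 = m) /\ (forall z, S z -> g z <= m).

(* Main.v *)
Require Import Defs.
From Stdlib Require Import Lra Lia.
Open Scope R_scope.


Definition cdiff (f : C -> C) (z l : C) : Prop :=
  forall eps, 0 < eps -> exists del, 0 < del /\
    forall w, Cmod (w - z) < del -> Cmod (f w - f z - l * (w - z)) <= eps * Cmod (w - z).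

Lemma is_derive_cdiff f z l : @is_derive C_AbsRing (AbsRing_NormedModule C_AbsRing) f z l -> cdiff f z l.
Proof.
  intros [_ H] eps Heps.
  assert (Hz : is_filter_lim (locally z) z) by (intros P HP; exact HP).
  specialize (H z Hz (mkposreal eps Heps)).
  apply (locally_le_locally_norm (K:=C_AbsRing) (V:=AbsRing_NormedModule C_AbsRing)) in H. destruct H as [d Hd].
  exists d. split. apply cond_pos. intros w Hw.
  specialize (Hd w Hw). simpl in Hd.
  replace (f w - f z - l * (w - z))%C with (minus (minus (f w) (f z)) (scal (minus w z) l)).
  exact Hd.
  unfold minus, plus, opp, scal; simpl. unfold mult; simpl. ring.
Qed.

Lemma cdiff_is_derive f z l : cdiff f z l -> @is_derive C_AbsRing (AbsRing_NormedModule C_AbsRing) f z l.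
Proof.
  intros H. split. apply is_linear_scal_l.
  intros x Hx. apply (is_filter_lim_locally_unique (K:=C_AbsRing) (V:=AbsRing_NormedModule C_AbsRing)) in Hx. subst x.
  intros eps. apply (locally_norm_le_locally (K:=C_AbsRing) (V:=AbsRing_NormedModule C_AbsRing)).
  destruct (H eps (cond_pos eps)) as [d [Hd Hw]].
  exists (mkposreal d Hd). intros y Hy. specialize (Hw y Hy). simpl.
  assert (E : minus (minus (f y) (f z)) (scal (minus y z) l) = (f y - f z - l * (y - z))%C).
  { unfold minus, plus, opp, scal; simpl. unfold mult; simpl. ring. }
  match goal with |- norm ?a <= _ * norm ?b => change (Cmod a <= eps * Cmod b) end.
  rewrite <- E in Hw. exact Hw.
Qed.


Lemma cdiff_const c z : cdiff (fun _ => c) z 0.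
Proof. apply is_derive_cdiff. apply (is_derive_const (K:=C_AbsRing) (V:=AbsRing_NormedModule C_AbsRing)). Qed.

Lemma cdiff_id z : cdiff (fun w => w) z 1.
Proof. intros eps Heps. exists 1. split. lra. intros w _.
  replace (w - z - 1 * (w - z))%C with (RtoC 0) by ring. rewrite Cmod_0.
  apply Rmult_le_pos. lra. apply Cmod_ge_0. Qed.

Lemma cdiff_plus f g z a b : cdiff f z a -> cdiff g z b -> cdiff (fun w => f w + g w)%C z (a + b)%C.
Proof. intros Ha Hb. apply is_derive_cdiff.
  apply (is_derive_plus (K:=C_AbsRing) (V:=AbsRing_NormedModule C_AbsRing)); apply cdiff_is_derive; assumption. Qed.

Lemma cdiff_opp f z a : cdiff f z a -> cdiff (fun w => - f w)%C z (- a)%C.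
Proof. intros Ha. apply is_derive_cdiff.
  apply (is_derive_opp (K:=C_AbsRing) (V:=AbsRing_NormedModule C_AbsRing)); apply cdiff_is_derive; assumption. Qed.

Lemma cdiff_mult f g z a b : cdiff f z a -> cdiff g z b -> cdiff (fun w => f w * g w)%C z (a * g z + f z * b)%C.
Proof. intros Ha Hb. apply is_derive_cdiff.
  apply (is_derive_mult (K:=C_AbsRing)); try (apply cdiff_is_derive; assumption).
  intros; apply Cmult_comm. Qed.

Lemma cdiff_comp f g z a b : cdiff g z b -> cdiff f (g z) a -> cdiff (fun w => f (g w)) z (b * a)%C.
Proof. intros Hb Ha. apply is_derive_cdiff.
  apply (is_derive_comp (K:=C_AbsRing) (V:=AbsRing_NormedModule C_AbsRing)); apply cdiff_is_derive; assumption. Qed.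


Lemma cdiff_ext f g z l : (forall w, f w = g w) -> cdiff f z l -> cdiff g z l.
Proof. intros E H eps He. destruct (H eps He) as [d [Hd Hw]]. exists d. split; auto.
  intros w Hw'. rewrite <- !E. auto. Qed.

Lemma cdiff_cont f z l : cdiff f z l -> forall eps, 0 < eps -> exists del, 0 < del /\
  forall w, Cmod (w - z) < del -> Cmod (f w - f z) < eps.
Proof.
  intros H eps He. destruct (H 1 Rlt_0_1) as [d [Hd Hw]].
  pose proof (Cmod_ge_0 l) as Hl.
  exists (Rmin d (eps / (Cmod l + 2))). split.
  apply Rmin_pos; auto. apply Rdiv_lt_0_compat; lra.
  intros w Hw'. specialize (Hw w (Rlt_le_trans _ _ _ Hw' (Rmin_l _ _))).
  assert (Hm := Rmin_r d (eps / (Cmod l + 2))).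
  replace (f w - f z)%C with ((f w - f z - l * (w - z)) + l * (w - z))%C by ring.
  eapply Rle_lt_trans. apply Cmod_triangle. rewrite Cmod_mult.
  pose proof (Cmod_ge_0 (w - z)).
  assert (Cmod (w - z) < eps / (Cmod l + 2)) by lra.
  assert (Cmod (w - z) * (Cmod l + 2) < eps).
  { replace eps with (eps / (Cmod l + 2) * (Cmod l + 2)) by (field; lra).
    apply Rmult_lt_compat_r; lra. }
  nra.
Qed.

Lemma cdiff_inv (u : C) : u <> 0%C -> cdiff Cinv u (- / (u * u))%C.
Proof.
  intros Hu eps He. assert (HU : 0 < Cmod u) by (apply (proj1 (Cmod_gt_0 u)); exact Hu).
  exists (Rmin (Cmod u / 2) (eps * (Cmod u * Cmod u * Cmod u) / 2)). split.
  apply Rmin_pos. lra. apply Rdiv_lt_0_compat; [|lra]. apply Rmult_lt_0_compat; auto.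
  repeat apply Rmult_lt_0_compat; auto.
  intros w Hw. assert (H1 := Rmin_l (Cmod u / 2) (eps * (Cmod u * Cmod u * Cmod u) / 2)).
  assert (H2 := Rmin_r (Cmod u / 2) (eps * (Cmod u * Cmod u * Cmod u) / 2)).
  set (m := Cmod (w - u)) in *.
  assert (Hwu : Cmod u <= Cmod w + m).
  { replace u with (w + (u - w))%C at 1 by ring. eapply Rle_trans. apply Cmod_triangle.
    unfold m. replace (u - w)%C with (- (w - u))%C by ring. rewrite Cmod_opp. lra. }
  assert (HW : Cmod u / 2 <= Cmod w) by lra.
  assert (Hw0 : w <> 0%C). { intro E. rewrite E, Cmod_0 in HW. lra. }
  replace (/ w - / u - - / (u * u) * (w - u))%C with ((w - u) * (w - u) * / (u * u * w))%C
    by (field; split; auto).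
  rewrite Cmod_mult, Cmod_inv, !Cmod_mult. 2: { apply (proj2 (Cmod_gt_0 _)). rewrite !Cmod_mult.
    repeat apply Rmult_lt_0_compat; lra. }
  fold m. pose proof (Cmod_ge_0 (w - u)). fold m in H.
  apply Rle_trans with (m * m * / (Cmod u * Cmod u * (Cmod u / 2))).
  apply Rmult_le_compat_l. nra. apply Rinv_le_contravar. repeat apply Rmult_lt_0_compat; lra.
  apply Rmult_le_compat_l. nra. lra.
  assert (m <= eps * (Cmod u * Cmod u * Cmod u) / 2) by lra.
  idtac.
  apply Rle_trans with (m * (eps * (Cmod u * Cmod u * Cmod u) / 2) * / (Cmod u * Cmod u * (Cmod u / 2))).
  apply Rmult_le_compat_r. left; apply Rinv_0_lt_compat; repeat apply Rmult_lt_0_compat; lra.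
  apply Rmult_le_compat_l; lra.
  right. field. lra.
Qed.


Definition cexp (w : C) : C := (exp (Re w) * cos (Im w), exp (Re w) * sin (Im w)).

Lemma cexp_add a b : cexp (a + b) = (cexp a * cexp b)%C.
Proof. destruct a as [a1 a2], b as [b1 b2]. unfold cexp, Cmult, Cplus; simpl.
  rewrite exp_plus, cos_plus, sin_plus. f_equal; ring. Qed.

Lemma Cmod_cexp w : Cmod (cexp w) = exp (Re w).
Proof. unfold Cmod, cexp; simpl.
  assert (H := sin2_cos2 (Im w)); unfold Rsqr in H.
  match goal with |- sqrt ?a = _ => replace a with (exp (Re w) ^ 2) end.
  rewrite sqrt_pow2; auto. left; apply exp_pos.
  transitivity (exp (Re w) ^ 2 * (sin (Im w) * sin (Im w) + cos (Im w) * cos (Im w)));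
  [rewrite H; ring | ring]. Qed.

Lemma Cmod_le_sum (x : C) : Cmod x <= Rabs (Re x) + Rabs (Im x).
Proof. unfold Cmod, Re, Im. pose proof (Rabs_pos (fst x)); pose proof (Rabs_pos (snd x)).
  rewrite <- (sqrt_pow2 (Rabs (fst x) + Rabs (snd x))) by lra. apply sqrt_le_1_alt.
  rewrite <- (pow2_abs (fst x)), <- (pow2_abs (snd x)). nra. Qed.

Lemma im_le_Cmod (x : C) : Rabs (Im x) <= Cmod x.
Proof. unfold Cmod, Im. rewrite <- (sqrt_pow2 (Rabs (snd x))) by apply Rabs_pos. apply sqrt_le_1_alt.
  rewrite <- (pow2_abs (snd x)). pose proof (pow2_ge_0 (fst x)). lra. Qed.

Lemma mvt_bound (f df : R -> R) (K x : R) :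
  (forall t, is_derive f t (df t)) -> (forall t, Rabs t <= Rabs x -> Rabs (df t) <= K) ->
  Rabs (f x - f 0) <= K * Rabs x.
Proof.
  intros Hd Hb. destruct (MVT_gen f 0 x df) as [c [Hc E]].
  - intros; apply Hd.
  - intros t _. apply derivable_continuous_pt. exists (df t). apply is_derive_Reals, Hd.
  - rewrite E, Rabs_mult. replace (x - 0) with x by ring. apply Rmult_le_compat_r. apply Rabs_pos.
    apply Hb. unfold Rmin, Rmax in Hc. destruct (Rle_dec 0 x); unfold Rabs;
    repeat destruct Rcase_abs; lra.
Qed.

Lemma exp_le3 t : t <= 1 -> exp t <= 3.
Proof. intros. apply Rle_trans with (exp 1). destruct H. left; apply exp_increasing; auto. subst; lra.
  apply exp_le_3. Qed.

Lemma abs_cos_sub1 b : Rabs (cos b - 1) <= Rabs b.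
Proof. replace (cos b - 1) with (cos b - cos 0) by (rewrite cos_0; ring).
  rewrite <- (Rmult_1_l (Rabs b)). apply (mvt_bound cos (fun t => - sin t)).
  intros t; auto_derive; auto; ring. intros t _. rewrite Rabs_Ropp. apply Rabs_le, SIN_bound. Qed.

Lemma abs_sin_le b : Rabs (sin b) <= Rabs b.
Proof. replace (sin b) with (sin b - sin 0) by (rewrite sin_0; ring).
  rewrite <- (Rmult_1_l (Rabs b)). apply (mvt_bound sin cos).
  intros t; auto_derive; auto; ring. intros t _. apply Rabs_le, COS_bound. Qed.

Lemma cexp_sub1 (h : C) : Cmod h <= 1 -> Cmod (cexp h - 1) <= 7 * Cmod h.
Proof.
  intros Hh. pose proof (re_le_Cmod h) as Ha. pose proof (im_le_Cmod h) as Hb.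
  destruct h as [a b]. simpl in Ha, Hb.
  assert (E1 : Rabs (exp a - 1) <= 3 * Rabs a).
  { replace (exp a - 1) with (exp a - exp 0) by (rewrite exp_0; ring).
    apply (mvt_bound exp exp). intros; apply is_derive_exp. intros t Ht.
    rewrite Rabs_right by (left; apply exp_pos). apply exp_le3.
    apply Rabs_le_between in Ht. destruct Ht. apply Rle_trans with (Rabs a). lra. lra. }
  eapply Rle_trans. apply Cmod_le_sum. unfold cexp, Re, Im; simpl.
  replace (exp a * cos b - 1) with ((exp a - 1) * cos b + (cos b - 1)) by ring.
  replace (exp a * sin b - 0) with (exp a * sin b) by ring.
  pose proof (Rabs_triang ((exp a - 1) * cos b) (cos b - 1)).
  rewrite !Rabs_mult in *. 
  assert (Rabs (cos b) <= 1) by (apply Rabs_le, COS_bound).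
  assert (Rabs (exp a) <= 3) by (rewrite Rabs_right by (left; apply exp_pos); apply exp_le3;
     apply Rabs_le_between in Ha; lra).
  pose proof (abs_cos_sub1 b). pose proof (abs_sin_le b).
  pose proof (Rabs_pos (exp a - 1)). pose proof (Rabs_pos (cos b)). pose proof (Rabs_pos (sin b)).
  pose proof (Rabs_pos (exp a)).
  assert (Rabs (exp a - 1) * Rabs (cos b) <= 3 * Rabs a) by nra.
  assert (Rabs (exp a) * Rabs (sin b) <= 3 * Rabs b) by nra.
  replace (exp a * cos b + - (1)) with ((exp a - 1) * cos b + (cos b - 1)) by ring.
  replace (exp a * sin b + - 0) with (exp a * sin b) by ring. rewrite Rabs_mult. lra.
Qed.

Lemma scal_pair t a b : (RtoC t * (a, b))%C = (t * a, t * b).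
Proof. unfold Cmult, RtoC; simpl. f_equal; ring. Qed.

Lemma cexp_quad (h : C) : Cmod h <= 1 -> Cmod (cexp h - 1 - h) <= 14 * (Cmod h * Cmod h).
Proof.
  intros Hh. destruct h as [a b].
  assert (key : forall t, Rabs t <= 1 -> Cmod ((a, b) * (cexp (t * a, t * b) - 1)) <= 7 * (Cmod (a,b) * Cmod (a,b))).
  { intros t Ht. rewrite Cmod_mult. rewrite <- scal_pair.
    assert (Cmod (RtoC t * (a, b)) <= Cmod (a, b)).
    { rewrite Cmod_mult, Cmod_R. pose proof (Cmod_ge_0 (a,b)). pose proof (Rabs_pos t). nra. }
    pose proof (cexp_sub1 _ (Rle_trans _ _ _ H Hh)). pose proof (Cmod_ge_0 (a,b)). nra. }
  assert (R1 : Rabs ((exp (1 * a) * cos (1 * b) - 1 * a) - (exp (0 * a) * cos (0 * b) - 0 * a))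
     <= 7 * (Cmod (a,b) * Cmod (a,b)) * Rabs 1).
  { apply (mvt_bound (fun t => exp (t * a) * cos (t * b) - t * a)
       (fun t => Re ((a, b) * (cexp (t * a, t * b) - 1)))).
    intros t. auto_derive; auto. unfold cexp, Re, Im, Cmult, Cminus, Cplus, Copp; simpl. ring.
    intros t Ht. rewrite Rabs_R1 in Ht. eapply Rle_trans. apply re_le_Cmod. apply key; auto. }
  assert (R2 : Rabs ((exp (1 * a) * sin (1 * b) - 1 * b) - (exp (0 * a) * sin (0 * b) - 0 * b))
     <= 7 * (Cmod (a,b) * Cmod (a,b)) * Rabs 1).
  { apply (mvt_bound (fun t => exp (t * a) * sin (t * b) - t * b)
       (fun t => Im ((a, b) * (cexp (t * a, t * b) - 1)))).
    intros t. auto_derive; auto. unfold cexp, Re, Im, Cmult, Cminus, Cplus, Copp; simpl. ring.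
    intros t Ht. rewrite Rabs_R1 in Ht. eapply Rle_trans. apply im_le_Cmod. apply key; auto. }
  rewrite Rabs_R1, !Rmult_1_l, !Rmult_0_l, exp_0, cos_0, sin_0 in *.
  eapply Rle_trans. apply Cmod_le_sum. unfold cexp, Re, Im; simpl.
  replace (exp a * cos b + - (1) + - a) with (exp a * cos b - a - (1 * 1 - 0)) by ring.
  replace (exp a * sin b + - 0 + - b) with (exp a * sin b - b - (1 * 0 - 0)) by ring.
  lra.
Qed.

Lemma cdiff_cexp z : cdiff cexp z (cexp z).
Proof.
  intros eps He. set (K := 14 * Cmod (cexp z) + 1).
  assert (HK : 0 < K) by (unfold K; pose proof (Cmod_ge_0 (cexp z)); lra).
  exists (Rmin 1 (eps / K)). split. apply Rmin_pos; [lra| apply Rdiv_lt_0_compat; lra].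
  intros w Hw. pose proof (Rmin_l 1 (eps / K)). pose proof (Rmin_r 1 (eps / K)).
  replace w with (z + (w - z))%C at 1 by ring. rewrite cexp_add.
  replace (cexp z * cexp (w - z) - cexp z - cexp z * (w - z))%C with (cexp z * (cexp (w - z) - 1 - (w - z)))%C by ring.
  rewrite Cmod_mult. pose proof (cexp_quad (w - z) ltac:(lra)).
  pose proof (Cmod_ge_0 (w - z)). pose proof (Cmod_ge_0 (cexp z)).
  assert (Cmod (w - z) * K <= eps).
  { replace eps with (eps / K * K) by (field; lra). apply Rmult_le_compat_r; lra. }
  unfold K in *.
  apply Rle_trans with (Cmod (cexp z) * (14 * (Cmod (w - z) * Cmod (w - z)))).
  apply Rmult_le_compat_l; auto. nra.
Qed.

Lemma cdiff_pow f z a n : cdiff f z a -> exists l, cdiff (fun w => f w ^ n)%C z l.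
Proof.
  intros Ha. induction n as [|n [l IH]].
  - exists 0%C. simpl. apply cdiff_const.
  - eexists. simpl. apply cdiff_mult; eauto.
Qed.


Definition Ccont (F : C -> C) (w : C) : Prop :=
  forall eps, 0 < eps -> exists del, 0 < del /\ forall u, Cmod (u - w) < del -> Cmod (F u - F w) < eps.

Lemma cdiff_Ccont F w l : cdiff F w l -> Ccont F w.
Proof. intros H. exact (cdiff_cont F w l H). Qed.

Definition good (F : C -> C) a b c d : Prop :=
  forall x y, a <= x <= b -> c <= y <= d -> Ccont F (x, y).

Lemma Cmod_hor x x0 y : Cmod ((x, y) - (x0, y)) = Rabs (x - x0).
Proof. replace ((x, y) - (x0, y))%C with (RtoC (x - x0)). apply Cmod_R.
  unfold RtoC, Cminus, Cplus, Copp; simpl. f_equal; ring. Qed.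

Lemma Cmod_ver x y y0 : Cmod ((x, y) - (x, y0)) = Rabs (y - y0).
Proof. unfold Cmod, Cminus, Cplus, Copp; simpl.
  replace ((x + - x) * ((x + - x) * 1) + (y + - y0) * ((y + - y0) * 1)) with (Rsqr (y - y0))
   by (unfold Rsqr; ring). apply sqrt_Rsqr_abs. Qed.

Lemma real_cont (f : R -> R) x0 :
  (forall eps, 0 < eps -> exists del, 0 < del /\ forall x, Rabs (x - x0) < del -> Rabs (f x - f x0) < eps) ->
  continuous f x0.
Proof. intros H. apply continuity_pt_filterlim. intros eps He.
  destruct (H eps He) as [d [Hd Hx]]. exists d. split; auto.
  intros x [_ Hx']. apply Hx. exact Hx'. Qed.

Lemma Re_minus (u v : C) : Re (u - v) = Re u - Re v.
Proof. destruct u, v. unfold Cminus, Cplus, Copp, Re, Im; simpl; ring. Qed.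
Lemma Im_minus (u v : C) : Im (u - v) = Im u - Im v.
Proof. destruct u, v. unfold Cminus, Cplus, Copp, Re, Im; simpl; ring. Qed.

Lemma Re_le (u : C) : Rabs (Re u) <= Cmod u.
Proof. apply re_le_Cmod. Qed.

Lemma cont_hor F x y (P : C -> R) : (forall u v, Rabs (P u - P v) <= Cmod (u - v)) ->
  Ccont F (x, y) -> continuous (fun t => P (F (t, y))) x.
Proof. intros HP H. apply real_cont. intros eps He. destruct (H eps He) as [d [Hd Hu]].
  exists d. split; auto. intros t Ht. eapply Rle_lt_trans. apply HP. apply Hu. rewrite Cmod_hor. auto. Qed.

Lemma cont_ver F x y (P : C -> R) : (forall u v, Rabs (P u - P v) <= Cmod (u - v)) ->
  Ccont F (x, y) -> continuous (fun t => P (F (x, t))) y.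
Proof. intros HP H. apply real_cont. intros eps He. destruct (H eps He) as [d [Hd Hu]].
  exists d. split; auto. intros t Ht. eapply Rle_lt_trans. apply HP. apply Hu. rewrite Cmod_ver. auto. Qed.

Lemma PRe u v : Rabs (Re u - Re v) <= Cmod (u - v).
Proof. rewrite <- Re_minus. apply re_le_Cmod. Qed.
Lemma PIm u v : Rabs (Im u - Im v) <= Cmod (u - v).
Proof. rewrite <- Im_minus. apply im_le_Cmod. Qed.

Lemma exr_minus f g a b : ex_RInt f a b -> ex_RInt g a b -> ex_RInt (fun x => f x - g x) a b.
Proof. intros. exact (ex_RInt_minus f g a b H H0). Qed.
Lemma exr_plus f g a b : ex_RInt f a b -> ex_RInt g a b -> ex_RInt (fun x => f x + g x) a b.
Proof. intros. exact (ex_RInt_plus f g a b H H0). Qed.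
Lemma rint_minus f g a b : ex_RInt f a b -> ex_RInt g a b -> RInt (fun x => f x - g x) a b = RInt f a b - RInt g a b.
Proof. intros. exact (RInt_minus f g a b H H0). Qed.
Lemma rint_plus f g a b : ex_RInt f a b -> ex_RInt g a b -> RInt (fun x => f x + g x) a b = RInt f a b + RInt g a b.
Proof. intros. exact (RInt_plus f g a b H H0). Qed.
Lemma rint_chasles f a b c : ex_RInt f a b -> ex_RInt f b c -> RInt f a b + RInt f b c = RInt f a c.
Proof. intros. exact (RInt_Chasles f a b c H H0). Qed.

Lemma ex_hor F a b c d y (P : C -> R) : (forall u v, Rabs (P u - P v) <= Cmod (u - v)) ->
  good F a b c d -> a <= b -> c <= y <= d -> ex_RInt (fun t => P (F (t, y))) a b.
Proof. intros HP G Hab Hy. apply (ex_RInt_continuous (V:=R_CompleteNormedModule)). rewrite Rmin_left, Rmax_right by lra.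
  intros z Hz. apply cont_hor; auto. Qed.

Lemma ex_ver F a b c d x (P : C -> R) : (forall u v, Rabs (P u - P v) <= Cmod (u - v)) ->
  good F a b c d -> c <= d -> a <= x <= b -> ex_RInt (fun t => P (F (x, t))) c d.
Proof. intros HP G Hcd Hx. apply (ex_RInt_continuous (V:=R_CompleteNormedModule)). rewrite Rmin_left, Rmax_right by lra.
  intros z Hz. apply cont_ver; auto. Qed.

Definition Jre F a b c d :=
  RInt (fun x => Re (F (x, c)) - Re (F (x, d))) a b - RInt (fun y => Im (F (b, y)) - Im (F (a, y))) c d.
Definition Jim F a b c d :=
  RInt (fun x => Im (F (x, c)) - Im (F (x, d))) a b + RInt (fun y => Re (F (b, y)) - Re (F (a, y))) c d.
Definition J F a b c d : C := (Jre F a b c d, Jim F a b c d).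

Lemma good_sub F a b c d a' b' c' d' : good F a b c d -> a <= a' -> b' <= b -> c <= c' -> d' <= d ->
  good F a' b' c' d'.
Proof. intros G h1 h2 h3 h4 x y Hx Hy. apply G; lra. Qed.

Ltac exedge1 :=
  match goal with
  | |- ex_RInt (fun t => Re (?F (t, ?y))) ?a ?b => apply (ex_hor F a b y y y Re PRe)
  | |- ex_RInt (fun t => Im (?F (t, ?y))) ?a ?b => apply (ex_hor F a b y y y Im PIm)
  | |- ex_RInt (fun t => Re (?F (?x, t))) ?c ?d => apply (ex_ver F x x c d x Re PRe)
  | |- ex_RInt (fun t => Im (?F (?x, t))) ?c ?d => apply (ex_ver F x x c d x Im PIm)
  end.
Ltac exedge := apply exr_minus; exedge1; first [lra | match goal with H : good _ _ _ _ _ |- _ => solve [eapply good_sub; [exact H|lra|lra|lra|lra]] end].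

Lemma J_splitx F a m b c d : good F a b c d -> a <= m <= b -> c <= d ->
  J F a b c d = (J F a m c d + J F m b c d)%C.
Proof.
  intros G Hm Hcd.
  assert (G1 := good_sub F a b c d a m c d G ltac:(lra) ltac:(lra) ltac:(lra) ltac:(lra)).
  assert (G2 := good_sub F a b c d m b c d G ltac:(lra) ltac:(lra) ltac:(lra) ltac:(lra)).
  unfold J, Jre, Jim, Cplus; simpl. f_equal.
  - rewrite <- (rint_chasles (fun x => Re (F (x, c)) - Re (F (x, d))) a m b).
    2,3: exedge.
    assert (E : RInt (fun y => Im (F (b, y)) - Im (F (a, y))) c d =
       RInt (fun y => Im (F (m, y)) - Im (F (a, y))) c d + RInt (fun y => Im (F (b, y)) - Im (F (m, y))) c d).
    { rewrite <- rint_plus. apply RInt_ext. intros. lra.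
      all: exedge. }
    rewrite E; ring.
  - rewrite <- (rint_chasles (fun x => Im (F (x, c)) - Im (F (x, d))) a m b).
    2,3: exedge.
    assert (E : RInt (fun y => Re (F (b, y)) - Re (F (a, y))) c d =
       RInt (fun y => Re (F (m, y)) - Re (F (a, y))) c d + RInt (fun y => Re (F (b, y)) - Re (F (m, y))) c d).
    { rewrite <- rint_plus. apply RInt_ext. intros; lra.
      all: exedge. }
    rewrite E; ring.
Qed.

Lemma J_splity F a b c m d : good F a b c d -> c <= m <= d -> a <= b ->
  J F a b c d = (J F a b c m + J F a b m d)%C.
Proof.
  intros G Hm Hab.
  assert (G1 := good_sub F a b c d a b c m G ltac:(lra) ltac:(lra) ltac:(lra) ltac:(lra)).
  assert (G2 := good_sub F a b c d a b m d G ltac:(lra) ltac:(lra) ltac:(lra) ltac:(lra)).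
  unfold J, Jre, Jim, Cplus; simpl. f_equal.
  - rewrite <- (rint_chasles (fun y => Im (F (b, y)) - Im (F (a, y))) c m d).
    2,3: exedge.
    assert (E : RInt (fun x => Re (F (x, c)) - Re (F (x, d))) a b =
       RInt (fun x => Re (F (x, c)) - Re (F (x, m))) a b + RInt (fun x => Re (F (x, m)) - Re (F (x, d))) a b).
    { rewrite <- rint_plus. apply RInt_ext. intros; lra.
      all: exedge. }
    rewrite E; ring.
  - rewrite <- (rint_chasles (fun y => Re (F (b, y)) - Re (F (a, y))) c m d).
    2,3: exedge.
    assert (E : RInt (fun x => Im (F (x, c)) - Im (F (x, d))) a b =
       RInt (fun x => Im (F (x, c)) - Im (F (x, m))) a b + RInt (fun x => Im (F (x, m)) - Im (F (x, d))) a b).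
    { rewrite <- rint_plus. apply RInt_ext. intros; lra.
      all: exedge. }
    rewrite E; ring.
Qed.


Lemma rint_const k a b : RInt (fun _ => k) a b = (b - a) * k.
Proof. exact (RInt_const (V:=R_CompleteNormedModule) a b k). Qed.

Lemma J_affine (al be : C) a b c d : J (fun w => al + be * w)%C a b c d = 0%C.
Proof.
  destruct be as [p q]. destruct al as [s t]. unfold J, Jre, Jim.
  rewrite (RInt_ext _ (fun _ => q * (d - c))) by (intros; unfold Cplus, Cmult; simpl; ring).
  rewrite (RInt_ext (fun y => Im _ - Im _) (fun _ => q * (b - a))) by (intros; unfold Cplus, Cmult; simpl; ring).
  rewrite (RInt_ext (fun x => Im _ - Im _) (fun _ => p * (c - d))) by (intros; unfold Cplus, Cmult; simpl; ring).
  rewrite (RInt_ext (fun y => Re _ - Re _) (fun _ => p * (b - a))) by (intros; unfold Cplus, Cmult; simpl; ring).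
  rewrite !rint_const. unfold RtoC. f_equal; ring.
Qed.

Lemma Jre_minus F G a b c d : good F a b c d -> good G a b c d -> a <= b -> c <= d ->
  Jre (fun w => F w - G w)%C a b c d = Jre F a b c d - Jre G a b c d.
Proof.
  intros HF HG Hab Hcd. unfold Jre.
  rewrite (RInt_ext (fun x => Re (F (x, c) - G (x, c)) - Re (F (x, d) - G (x, d)))
        (fun x => (Re (F (x, c)) - Re (F (x, d))) - (Re (G (x, c)) - Re (G (x, d))))).
  2: { intros; rewrite !Re_minus; lra. }
  rewrite (RInt_ext (fun y => Im (F (b, y) - G (b, y)) - Im (F (a, y) - G (a, y)))
        (fun y => (Im (F (b, y)) - Im (F (a, y))) - (Im (G (b, y)) - Im (G (a, y))))).
  2: { intros; rewrite !Im_minus; lra. }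
  rewrite (rint_minus (fun x => Re (F (x, c)) - Re (F (x, d)))).
  rewrite (rint_minus (fun y => Im (F (b, y)) - Im (F (a, y)))). ring. all: exedge.
Qed.

Lemma Jim_minus F G a b c d : good F a b c d -> good G a b c d -> a <= b -> c <= d ->
  Jim (fun w => F w - G w)%C a b c d = Jim F a b c d - Jim G a b c d.
Proof.
  intros HF HG Hab Hcd. unfold Jim.
  rewrite (RInt_ext (fun x => Im (F (x, c) - G (x, c)) - Im (F (x, d) - G (x, d)))
        (fun x => (Im (F (x, c)) - Im (F (x, d))) - (Im (G (x, c)) - Im (G (x, d))))).
  2: { intros; rewrite !Im_minus; lra. }
  rewrite (RInt_ext (fun y => Re (F (b, y) - G (b, y)) - Re (F (a, y) - G (a, y)))
        (fun y => (Re (F (b, y)) - Re (F (a, y))) - (Re (G (b, y)) - Re (G (a, y))))).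
  2: { intros; rewrite !Re_minus; lra. }
  rewrite (rint_minus (fun x => Im (F (x, c)) - Im (F (x, d)))).
  rewrite (rint_minus (fun y => Re (F (b, y)) - Re (F (a, y)))). ring. all: exedge.
Qed.

Lemma J_minus F G a b c d : good F a b c d -> good G a b c d -> a <= b -> c <= d ->
  J (fun w => F w - G w)%C a b c d = (J F a b c d - J G a b c d)%C.
Proof. intros. unfold J. rewrite Jre_minus, Jim_minus by auto.
  unfold Cminus, Cplus, Copp; simpl. f_equal; ring. Qed.

Lemma J_bound F a b c d M : good F a b c d -> a <= b -> c <= d ->
  (forall x y, a <= x <= b -> c <= y <= d -> Cmod (F (x, y)) <= M) ->
  Cmod (J F a b c d) <= 4 * M * ((b - a) + (d - c)).
Proof.
  intros G Hab Hcd HM.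
  assert (B : forall (P : C -> R), (forall u, Rabs (P u) <= Cmod u) -> forall u v, Cmod u <= M -> Cmod v <= M ->
     Rabs (P u - P v) <= 2 * M).
  { intros P HP u v Hu Hv. eapply Rle_trans. apply Rabs_triang. rewrite Rabs_Ropp.
    pose proof (HP u); pose proof (HP v); lra. }
  assert (HR : forall u, Rabs (Re u) <= Cmod u) by apply re_le_Cmod.
  assert (HI : forall u, Rabs (Im u) <= Cmod u) by apply im_le_Cmod.
  assert (h1 : Rabs (RInt (fun x => Re (F (x, c)) - Re (F (x, d))) a b) <= (b - a) * (2 * M)).
  { apply abs_RInt_le_const; auto. exedge. intros; apply B; auto; apply HM; lra. }
  assert (h2 : Rabs (RInt (fun x => Im (F (x, c)) - Im (F (x, d))) a b) <= (b - a) * (2 * M)).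
  { apply abs_RInt_le_const; auto. exedge. intros; apply B; auto; apply HM; lra. }
  assert (h3 : Rabs (RInt (fun y => Re (F (b, y)) - Re (F (a, y))) c d) <= (d - c) * (2 * M)).
  { apply abs_RInt_le_const; auto. exedge. intros; apply B; auto; apply HM; lra. }
  assert (h4 : Rabs (RInt (fun y => Im (F (b, y)) - Im (F (a, y))) c d) <= (d - c) * (2 * M)).
  { apply abs_RInt_le_const; auto. exedge. intros; apply B; auto; apply HM; lra. }
  eapply Rle_trans. apply Cmod_le_sum. unfold J, Jre, Jim, Re, Im; simpl.
  unfold Re, Im in *.
  set (A1 := RInt (fun x => fst (F (x, c)) - fst (F (x, d))) a b) in *.
  set (A2 := RInt (fun y => snd (F (b, y)) - snd (F (a, y))) c d) in *.
  set (A3 := RInt (fun x => snd (F (x, c)) - snd (F (x, d))) a b) in *.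
  set (A4 := RInt (fun y => fst (F (b, y)) - fst (F (a, y))) c d) in *.
  assert (Rabs (A1 - A2) <= Rabs A1 + Rabs A2) by (unfold Rminus; rewrite <- (Rabs_Ropp A2); apply Rabs_triang).
  pose proof (Rabs_triang A3 A4). lra.
Qed.


Definition rect := ((R * R) * (R * R))%type.
Definition ra (q : rect) := fst (fst q).
Definition rb (q : rect) := snd (fst q).
Definition rc (q : rect) := fst (snd q).
Definition rd (q : rect) := snd (snd q).
Definition Jq F (q : rect) := J F (ra q) (rb q) (rc q) (rd q).

Definition pick F (q : rect) : rect :=
  let a := ra q in let b := rb q in let c := rc q in let d := rd q in
  let m := (a + b) / 2 in let n := (c + d) / 2 in
  let q1 : rect := ((a, m), (c, n)) in
  let q2 : rect := ((m, b), (c, n)) in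
  let q3 : rect := ((a, m), (n, d)) in
  let q4 : rect := ((m, b), (n, d)) in
  if Rle_dec (Cmod (Jq F q) / 4) (Cmod (Jq F q1)) then q1 else
  if Rle_dec (Cmod (Jq F q) / 4) (Cmod (Jq F q2)) then q2 else
  if Rle_dec (Cmod (Jq F q) / 4) (Cmod (Jq F q3)) then q3 else q4.

Lemma pick_spec F q : good F (ra q) (rb q) (rc q) (rd q) -> ra q <= rb q -> rc q <= rd q ->
  let q' := pick F q in
  ra q <= ra q' /\ rb q' <= rb q /\ rc q <= rc q' /\ rd q' <= rd q /\
  rb q' - ra q' = (rb q - ra q) / 2 /\ rd q' - rc q' = (rd q - rc q) / 2 /\
  Cmod (Jq F q) <= 4 * Cmod (Jq F q').
Proof.
  intros G Hab Hcd. destruct q as [[a b] [c d]]. unfold ra, rb, rc, rd in *; simpl in *.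
  set (m := (a + b) / 2). set (n := (c + d) / 2).
  assert (E : Jq F ((a, b), (c, d)) = (J F a m c n + J F a m n d + (J F m b c n + J F m b n d))%C).
  { unfold Jq, ra, rb, rc, rd; simpl.
    rewrite (J_splitx F a m b c d) by (auto; unfold m; lra).
    rewrite (J_splity F a m c n d), (J_splity F m b c n d); auto; unfold m, n in *;
    try lra; eapply good_sub; eauto; lra. }
  assert (T : Cmod (Jq F ((a, b), (c, d))) <= Cmod (J F a m c n) + Cmod (J F m b c n) + Cmod (J F a m n d) + Cmod (J F m b n d)).
  { rewrite E. eapply Rle_trans. apply Cmod_triangle. eapply Rle_trans. apply Rplus_le_compat; apply Cmod_triangle. lra. }
  unfold pick, Jq, ra, rb, rc, rd in *; simpl in *. fold m n.
  destruct Rle_dec as [h|h]; simpl. { unfold m, n in *; repeat split; lra. }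
  destruct Rle_dec as [h2|h2]; simpl. { unfold m, n in *; repeat split; lra. }
  destruct Rle_dec as [h3|h3]; simpl. { unfold m, n in *; repeat split; lra. }
  unfold m, n in *; repeat split; lra.
Qed.

Fixpoint seqQ F (q0 : rect) (n : nat) : rect :=
  match n with O => q0 | S n => pick F (seqQ F q0 n) end.

Lemma seqQ_inv F q0 : good F (ra q0) (rb q0) (rc q0) (rd q0) -> ra q0 <= rb q0 -> rc q0 <= rd q0 ->
  forall n, let q := seqQ F q0 n in
  ra q0 <= ra q /\ ra q <= rb q /\ rb q <= rb q0 /\ rc q0 <= rc q /\ rc q <= rd q /\ rd q <= rd q0 /\
  rb q - ra q = (rb q0 - ra q0) / 2 ^ n /\ rd q - rc q = (rd q0 - rc q0) / 2 ^ n /\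
  Cmod (Jq F q0) <= (2 ^ n * 2 ^ n) * Cmod (Jq F q).
Proof.
  intros G Hab Hcd n. induction n as [|n IH]; simpl.
  - repeat split; try lra. 
  - destruct IH as (h1 & h2 & h3 & h4 & h5 & h6 & h7 & h8 & h9).
    assert (G' : good F (ra (seqQ F q0 n)) (rb (seqQ F q0 n)) (rc (seqQ F q0 n)) (rd (seqQ F q0 n)))
      by (eapply good_sub; eauto).
    destruct (pick_spec F (seqQ F q0 n) G' h2 h5) as (k1 & k2 & k3 & k4 & k5 & k6 & k7).
    assert (P : 0 < 2 ^ n) by (apply pow_lt; lra).
    repeat split; try lra.
    + rewrite k5, h7. field. lra.
    + rewrite k6, h8. field. lra.
    + eapply Rle_trans. apply h9. 
      match goal with |- _ <= _ * Cmod ?X => replace (2 * 2 ^ n * (2 * 2 ^ n) * Cmod X) with (2 ^ n * 2 ^ n * (4 * Cmod X)) by ring end.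
      apply Rmult_le_compat_l. nra. exact k7.
Qed.

Lemma seqQ_step F q0 : good F (ra q0) (rb q0) (rc q0) (rd q0) -> ra q0 <= rb q0 -> rc q0 <= rd q0 ->
  forall n, ra (seqQ F q0 n) <= ra (seqQ F q0 (S n)) /\ rb (seqQ F q0 (S n)) <= rb (seqQ F q0 n) /\
            rc (seqQ F q0 n) <= rc (seqQ F q0 (S n)) /\ rd (seqQ F q0 (S n)) <= rd (seqQ F q0 n).
Proof.
  intros G Hab Hcd n. destruct (seqQ_inv F q0 G Hab Hcd n) as (h1 & h2 & h3 & h4 & h5 & h6 & _).
  assert (G' : good F (ra (seqQ F q0 n)) (rb (seqQ F q0 n)) (rc (seqQ F q0 n)) (rd (seqQ F q0 n)))
      by (eapply good_sub; eauto).
  destruct (pick_spec F (seqQ F q0 n) G' h2 h5) as (k1 & k2 & k3 & k4 & _). simpl. auto.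
Qed.

Lemma seqQ_mono F q0 : good F (ra q0) (rb q0) (rc q0) (rd q0) -> ra q0 <= rb q0 -> rc q0 <= rd q0 ->
  forall j k, (j <= k)%nat -> ra (seqQ F q0 j) <= ra (seqQ F q0 k) /\ rb (seqQ F q0 k) <= rb (seqQ F q0 j) /\
            rc (seqQ F q0 j) <= rc (seqQ F q0 k) /\ rd (seqQ F q0 k) <= rd (seqQ F q0 j).
Proof.
  intros G Hab Hcd j k Hjk. induction Hjk. repeat split; lra.
  destruct (seqQ_step F q0 G Hab Hcd m). lra.
Qed.

Lemma INR_le_pow2 n : INR n <= 2 ^ n.
Proof. induction n. simpl; lra. rewrite S_INR. simpl.
  assert (1 <= 2 ^ n) by (apply pow_R1_Rle; lra). lra. Qed.

Lemma good_minus F G a b c d : good F a b c d -> good G a b c d -> good (fun w => F w - G w)%C a b c d.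
Proof. intros HF HG x y hx hy eps He. destruct (HF x y hx hy (eps/2)) as [d1 [Hd1 H1]]. lra.
  destruct (HG x y hx hy (eps/2)) as [d2 [Hd2 H2]]. lra.
  exists (Rmin d1 d2). split. apply Rmin_pos; auto. intros u Hu.
  specialize (H1 u (Rlt_le_trans _ _ _ Hu (Rmin_l _ _))). specialize (H2 u (Rlt_le_trans _ _ _ Hu (Rmin_r _ _))).
  replace (F u - G u - (F (x, y) - G (x, y)))%C with ((F u - F (x, y)) + - (G u - G (x, y)))%C by ring.
  eapply Rle_lt_trans. apply Cmod_triangle. rewrite Cmod_opp. lra. Qed.

Lemma affine_cdiff (al be : C) w : cdiff (fun w => al + be * w)%C w (0 + (0 * w + be * 1))%C.
Proof. apply cdiff_plus. apply cdiff_const. apply (cdiff_mult (fun _ => be) (fun w => w)).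
  apply cdiff_const. apply cdiff_id. Qed.

Lemma goursat F a b c d : a <= b -> c <= d ->
  (forall x y, a <= x <= b -> c <= y <= d -> exists l, cdiff F (x, y) l) -> J F a b c d = 0%C.
Proof.
  intros Hab Hcd HD.
  assert (G : good F a b c d) by (intros x y hx hy; destruct (HD x y hx hy) as [l Hl]; exact (cdiff_Ccont _ _ _ Hl)).
  set (q0 := ((a, b), (c, d)) : rect).
  assert (G0 : good F (ra q0) (rb q0) (rc q0) (rd q0)) by exact G.
  assert (I := seqQ_inv F q0 G0 Hab Hcd).
  assert (Mo := seqQ_mono F q0 G0 Hab Hcd).
  assert (AB : forall n k, ra (seqQ F q0 n) <= rb (seqQ F q0 k) /\ rc (seqQ F q0 n) <= rd (seqQ F q0 k)).
  { intros n k. destruct (Compare_dec.le_ge_dec n k) as [h|h].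
    - destruct (Mo n k h) as (m1 & m2 & m3 & m4). destruct (I k) as (i1 & i2 & i3 & i4 & i5 & _). lra.
    - destruct (Mo k n h) as (m1 & m2 & m3 & m4). destruct (I n) as (i1 & i2 & i3 & i4 & i5 & _). lra. }
  destruct (completeness (fun x => exists n, x = ra (seqQ F q0 n))) as [p1 [Hp1u Hp1l]].
  { exists b. intros x [n ->]. destruct (AB n O) as [h _]. exact h. }
  { exists a. exists O. reflexivity. }
  destruct (completeness (fun x => exists n, x = rc (seqQ F q0 n))) as [p2 [Hp2u Hp2l]].
  { exists d. intros x [n ->]. destruct (AB n O) as [_ h]. exact h. }
  { exists c. exists O. reflexivity. }
  assert (P1 : forall n, ra (seqQ F q0 n) <= p1 <= rb (seqQ F q0 n)).
  { intros n. split. apply Hp1u. exists n; reflexivity. apply Hp1l. intros x [k ->]. apply AB. }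
  assert (P2 : forall n, rc (seqQ F q0 n) <= p2 <= rd (seqQ F q0 n)).
  { intros n. split. apply Hp2u. exists n; reflexivity. apply Hp2l. intros x [k ->]. apply AB. }
  destruct (HD p1 p2) as [l Hl]. apply (P1 O). apply (P2 O).
  set (D := (b - a) + (d - c)).
  assert (HDp : 0 <= D) by (unfold D; lra).
  assert (Key : forall eps, 0 < eps -> Cmod (J F a b c d) <= 4 * eps * (D * D)).
  { intros eps He. destruct (Hl eps He) as [del [Hdel Hw]].
    destruct (archimed_cor1 (del / (D + 1))) as [N [HN HN0]]. apply Rdiv_lt_0_compat; lra.
    set (q := seqQ F q0 N).
    destruct (I N) as (i1 & i2 & i3 & i4 & i5 & i6 & i7 & i8 & i9). fold q in i1, i2, i3, i4, i5, i6, i7, i8, i9.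
    change (ra q0) with a in *. change (rb q0) with b in *. change (rc q0) with c in *. change (rd q0) with d in *.
    assert (P1N := P1 N). assert (P2N := P2 N). fold q in P1N, P2N.
    assert (Hpow : 0 < 2 ^ N) by (apply pow_lt; lra).
    set (s := D / 2 ^ N).
    assert (Hs : rb q - ra q + (rd q - rc q) = s) by (rewrite i7, i8; unfold s, D, Rdiv; ring).
    assert (Hs0 : 0 <= s) by (unfold s; apply Rmult_le_pos; [lra | left; apply Rinv_0_lt_compat; lra]).
    assert (Hsd : s < del).
    { assert (HN' : 0 < INR N) by (apply lt_0_INR; lia).
      assert (/ 2 ^ N <= / INR N) by (apply Rinv_le_contravar; auto; apply INR_le_pow2).
      assert (s <= D * / INR N) by (unfold s, Rdiv; apply Rmult_le_compat_l; auto).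
      assert (D * / INR N <= D * (del / (D + 1))) by (apply Rmult_le_compat_l; lra).
      assert (D * (del / (D + 1)) < del).
      { unfold Rdiv. replace (D * (del * / (D + 1))) with (del * (D / (D + 1))) by (unfold Rdiv; ring).
        assert (D / (D + 1) < 1). { apply (Rmult_lt_reg_r (D + 1)). lra. unfold Rdiv. rewrite Rmult_assoc, Rinv_l by lra. lra. }
        nra. }
      lra. }
    set (p := (p1, p2) : C). fold p in Hw.
    set (aff := (fun w => (F p - l * p) + l * w)%C).
    assert (Gq : good F (ra q) (rb q) (rc q) (rd q)) by (eapply good_sub; eauto).
    assert (Ga : good aff (ra q) (rb q) (rc q) (rd q)).
    { intros x y _ _. eapply cdiff_Ccont. apply affine_cdiff. }
    assert (EJ : Jq F q = J (fun w => F w - aff w)%C (ra q) (rb q) (rc q) (rd q)).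
    { rewrite J_minus; auto. unfold aff. rewrite J_affine. unfold Jq. ring. }
    assert (Bd : Cmod (Jq F q) <= 4 * (eps * s) * s).
    { rewrite EJ. rewrite <- Hs at 2. apply J_bound; auto.
      - intros x y. apply (good_minus F aff); auto.
      - intros x y hx hy.
        assert (Dw : Cmod ((x, y) - p) <= s).
        { eapply Rle_trans. apply Cmod_le_sum. unfold p, Re, Im; simpl.
          replace (x + - p1) with (x - p1) by ring. replace (y + - p2) with (y - p2) by ring.
          unfold Rabs; repeat destruct Rcase_abs; lra. }
        replace (F (x, y) - aff (x, y))%C with (F (x, y) - F p - l * ((x, y) - p))%C by (unfold aff; ring).
        eapply Rle_trans. apply Hw. lra. apply Rmult_le_compat_l; lra. }
    change (Cmod (Jq F q0) <= 4 * eps * (D * D)).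
    eapply Rle_trans. apply i9.
    replace (4 * eps * (D * D)) with (2 ^ N * 2 ^ N * (4 * (eps * s) * s)).
    apply Rmult_le_compat_l. nra. exact Bd.
    unfold s. field. lra. }
  destruct (Req_dec (Cmod (J F a b c d)) 0) as [h|h]. apply Cmod_eq_0; auto.
  exfalso. pose proof (Cmod_ge_0 (J F a b c d)).
  set (X := Cmod (J F a b c d)) in *.
  assert (HX : 0 < X) by lra.
  assert (He : 0 < X / (8 * (D * D) + 1)) by (apply Rdiv_lt_0_compat; nra).
  specialize (Key _ He).
  assert (4 * (X / (8 * (D * D) + 1)) * (D * D) < X).
  { replace (4 * (X / (8 * (D * D) + 1)) * (D * D)) with (X * (4 * (D * D) / (8 * (D * D) + 1))) by (field; nra).
    assert (4 * (D * D) / (8 * (D * D) + 1) < 1).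
    { apply (Rmult_lt_reg_r (8 * (D * D) + 1)). nra. unfold Rdiv. rewrite Rmult_assoc, Rinv_l by nra. nra. }
    nra. }
  lra.
Qed.


Definition bgood F a b c d := good F a b c c /\ good F a b d d /\ good F a a c d /\ good F b b c d.

Lemma bgood_of F a b c d :
  (forall x, a <= x <= b -> Ccont F (x, c) /\ Ccont F (x, d)) ->
  (forall y, c <= y <= d -> Ccont F (a, y) /\ Ccont F (b, y)) -> bgood F a b c d.
Proof.
  intros H1 H2. repeat split; intros x y hx hy.
  - replace y with c by lra. apply H1; lra.
  - replace y with d by lra. apply H1; lra.
  - replace x with a by lra. apply H2; lra.
  - replace x with b by lra. apply H2; lra.
Qed.

Lemma exr_scal k f a b : ex_RInt f a b -> ex_RInt (fun x => k * f x) a b.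
Proof. intros. exact (ex_RInt_scal f a b k H). Qed.
Lemma rint_scal k f a b : ex_RInt f a b -> RInt (fun x => k * f x) a b = k * RInt f a b.
Proof. intros. exact (RInt_scal f a b k H). Qed.

Ltac bexedge := match goal with
  | |- ex_RInt (fun x => ?k * (@?f x)) _ _ => apply (exr_scal k f); exedge
  | _ => exedge end.

Lemma J_plus F G a b c d : bgood F a b c d -> bgood G a b c d -> a <= b -> c <= d ->
  J (fun w => F w + G w)%C a b c d = (J F a b c d + J G a b c d)%C.
Proof.
  intros (F1 & F2 & F3 & F4) (G1 & G2 & G3 & G4) Hab Hcd.
  assert (E1 : Jre (fun w => F w + G w)%C a b c d = Jre F a b c d + Jre G a b c d).
  { unfold Jre.
    rewrite (RInt_ext (fun x => Re (F (x, c) + G (x, c)) - Re (F (x, d) + G (x, d)))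
        (fun x => (Re (F (x, c)) - Re (F (x, d))) + (Re (G (x, c)) - Re (G (x, d))))).
    2: { intros; unfold Cplus, Re, Im; simpl; lra. }
    rewrite (RInt_ext (fun y => Im (F (b, y) + G (b, y)) - Im (F (a, y) + G (a, y)))
        (fun y => (Im (F (b, y)) - Im (F (a, y))) + (Im (G (b, y)) - Im (G (a, y))))).
    2: { intros; unfold Cplus, Re, Im; simpl; lra. }
    rewrite (rint_plus (fun x => Re (F (x, c)) - Re (F (x, d)))).
    rewrite (rint_plus (fun y => Im (F (b, y)) - Im (F (a, y)))). ring. all: exedge. }
  assert (E2 : Jim (fun w => F w + G w)%C a b c d = Jim F a b c d + Jim G a b c d).
  { unfold Jim.
    rewrite (RInt_ext (fun x => Im (F (x, c) + G (x, c)) - Im (F (x, d) + G (x, d)))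
        (fun x => (Im (F (x, c)) - Im (F (x, d))) + (Im (G (x, c)) - Im (G (x, d))))).
    2: { intros; unfold Cplus, Re, Im; simpl; lra. }
    rewrite (RInt_ext (fun y => Re (F (b, y) + G (b, y)) - Re (F (a, y) + G (a, y)))
        (fun y => (Re (F (b, y)) - Re (F (a, y))) + (Re (G (b, y)) - Re (G (a, y))))).
    2: { intros; unfold Cplus, Re, Im; simpl; lra. }
    rewrite (rint_plus (fun x => Im (F (x, c)) - Im (F (x, d)))).
    rewrite (rint_plus (fun y => Re (F (b, y)) - Re (F (a, y)))). ring. all: exedge. }
  unfold J. rewrite E1, E2. reflexivity.
Qed.

Lemma J_scal (k : C) F a b c d : bgood F a b c d -> a <= b -> c <= d ->
  J (fun w => k * F w)%C a b c d = (k * J F a b c d)%C.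
Proof.
  intros (F1 & F2 & F3 & F4) Hab Hcd. destruct k as [kr ki].
  assert (E1 : Jre (fun w => (kr, ki) * F w)%C a b c d = kr * Jre F a b c d - ki * Jim F a b c d).
  { unfold Jre, Jim.
    rewrite (RInt_ext (fun x => Re ((kr, ki) * F (x, c)) - Re ((kr, ki) * F (x, d)))
        (fun x => kr * (Re (F (x, c)) - Re (F (x, d))) - ki * (Im (F (x, c)) - Im (F (x, d))))).
    2: { intros; unfold Cmult; simpl. unfold Re, Im. simpl. ring_simplify. lra. }
    rewrite (RInt_ext (fun y => Im ((kr, ki) * F (b, y)) - Im ((kr, ki) * F (a, y)))
        (fun y => kr * (Im (F (b, y)) - Im (F (a, y))) + ki * (Re (F (b, y)) - Re (F (a, y))))).
    2: { intros; unfold Cmult; simpl. unfold Re, Im. simpl. ring_simplify. lra. }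
    rewrite (rint_minus (fun x => kr * (Re (F (x, c)) - Re (F (x, d))))).
    rewrite (rint_plus (fun y => kr * (Im (F (b, y)) - Im (F (a, y))))).
    rewrite !(rint_scal kr), !(rint_scal ki). ring. all: bexedge. }
  assert (E2 : Jim (fun w => (kr, ki) * F w)%C a b c d = kr * Jim F a b c d + ki * Jre F a b c d).
  { unfold Jre, Jim.
    rewrite (RInt_ext (fun x => Im ((kr, ki) * F (x, c)) - Im ((kr, ki) * F (x, d)))
        (fun x => kr * (Im (F (x, c)) - Im (F (x, d))) + ki * (Re (F (x, c)) - Re (F (x, d))))).
    2: { intros; unfold Cmult; simpl. unfold Re, Im. simpl. ring_simplify. lra. }
    rewrite (RInt_ext (fun y => Re ((kr, ki) * F (b, y)) - Re ((kr, ki) * F (a, y)))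
        (fun y => kr * (Re (F (b, y)) - Re (F (a, y))) - ki * (Im (F (b, y)) - Im (F (a, y))))).
    2: { intros; unfold Cmult; simpl. unfold Re, Im. simpl. ring_simplify. lra. }
    rewrite (rint_plus (fun x => kr * (Im (F (x, c)) - Im (F (x, d))))).
    rewrite (rint_minus (fun y => kr * (Re (F (b, y)) - Re (F (a, y))))).
    rewrite !(rint_scal kr), !(rint_scal ki). ring. all: bexedge. }
  unfold J. rewrite E1, E2. unfold Cmult; simpl. f_equal; ring.
Qed.

Lemma J_bound_b F a b c d M : bgood F a b c d -> a <= b -> c <= d ->
  (forall x, a <= x <= b -> Cmod (F (x, c)) <= M /\ Cmod (F (x, d)) <= M) ->
  (forall y, c <= y <= d -> Cmod (F (a, y)) <= M /\ Cmod (F (b, y)) <= M) ->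
  Cmod (J F a b c d) <= 4 * M * ((b - a) + (d - c)).
Proof.
  intros (F1 & F2 & F3 & F4) Hab Hcd HM1 HM2.
  assert (B : forall (P : C -> R), (forall u, Rabs (P u) <= Cmod u) -> forall u v, Cmod u <= M -> Cmod v <= M ->
     Rabs (P u - P v) <= 2 * M).
  { intros P HP u v Hu Hv. eapply Rle_trans. apply Rabs_triang. rewrite Rabs_Ropp.
    pose proof (HP u); pose proof (HP v); lra. }
  assert (HR : forall u, Rabs (Re u) <= Cmod u) by apply re_le_Cmod.
  assert (HI : forall u, Rabs (Im u) <= Cmod u) by apply im_le_Cmod.
  assert (h1 : Rabs (RInt (fun x => Re (F (x, c)) - Re (F (x, d))) a b) <= (b - a) * (2 * M)).
  { apply abs_RInt_le_const; auto. exedge. intros; apply B; auto; apply HM1; lra. }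
  assert (h2 : Rabs (RInt (fun x => Im (F (x, c)) - Im (F (x, d))) a b) <= (b - a) * (2 * M)).
  { apply abs_RInt_le_const; auto. exedge. intros; apply B; auto; apply HM1; lra. }
  assert (h3 : Rabs (RInt (fun y => Re (F (b, y)) - Re (F (a, y))) c d) <= (d - c) * (2 * M)).
  { apply abs_RInt_le_const; auto. exedge. intros; apply B; auto; apply HM2; lra. }
  assert (h4 : Rabs (RInt (fun y => Im (F (b, y)) - Im (F (a, y))) c d) <= (d - c) * (2 * M)).
  { apply abs_RInt_le_const; auto. exedge. intros; apply B; auto; apply HM2; lra. }
  eapply Rle_trans. apply Cmod_le_sum. unfold J, Jre, Jim, Re, Im; simpl.
  unfold Re, Im in *.
  set (A1 := RInt (fun x => fst (F (x, c)) - fst (F (x, d))) a b) in *.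
  set (A2 := RInt (fun y => snd (F (b, y)) - snd (F (a, y))) c d) in *.
  set (A3 := RInt (fun x => snd (F (x, c)) - snd (F (x, d))) a b) in *.
  set (A4 := RInt (fun y => fst (F (b, y)) - fst (F (a, y))) c d) in *.
  assert (Rabs (A1 - A2) <= Rabs A1 + Rabs A2) by (unfold Rminus; rewrite <- (Rabs_Ropp A2); apply Rabs_triang).
  pose proof (Rabs_triang A3 A4). lra.
Qed.

Lemma J_ext_b F G a b c d :
  (forall x, a < x < b -> F (x, c) = G (x, c) /\ F (x, d) = G (x, d)) ->
  (forall y, c < y < d -> F (a, y) = G (a, y) /\ F (b, y) = G (b, y)) -> a <= b -> c <= d ->
  J F a b c d = J G a b c d.
Proof.
  intros H1 H2 Hab Hcd. unfold J, Jre, Jim.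
  rewrite (RInt_ext (fun x => Re (F (x, c)) - Re (F (x, d))) (fun x => Re (G (x, c)) - Re (G (x, d)))).
  rewrite (RInt_ext (fun x => Im (F (x, c)) - Im (F (x, d))) (fun x => Im (G (x, c)) - Im (G (x, d)))).
  rewrite (RInt_ext (fun y => Re (F (b, y)) - Re (F (a, y))) (fun y => Re (G (b, y)) - Re (G (a, y)))).
  rewrite (RInt_ext (fun y => Im (F (b, y)) - Im (F (a, y))) (fun y => Im (G (b, y)) - Im (G (a, y)))).
  reflexivity.
  all: intros t Ht; rewrite ?Rmin_left, ?Rmax_right in Ht by lra.
  all: first [destruct (H1 t Ht) as [-> ->] | destruct (H2 t Ht) as [-> ->]]; reflexivity.
Qed.


Lemma Ceq_dec (u v : C) : {u = v} + {u <> v}.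
Proof. destruct u as [u1 u2], v as [v1 v2].
  destruct (Req_EM_T u1 v1) as [e1|n1]; [destruct (Req_EM_T u2 v2) as [e2|n2]|].
  - left; subst; reflexivity.
  - right; intro E; inversion E; auto.
  - right; intro E; inversion E; auto. Defined.

Lemma cdiff_local f g w l r : cdiff g w l -> 0 < r -> (forall u, Cmod (u - w) < r -> f u = g u) -> cdiff f w l.
Proof. intros H Hr E eps He. destruct (H eps He) as [d [Hd Hw]]. exists (Rmin d r). split.
  apply Rmin_pos; auto. intros u Hu. rewrite (E u), (E w). apply Hw. eapply Rlt_le_trans; eauto; apply Rmin_l.
  replace (w - w)%C with (RtoC 0) by ring. rewrite Cmod_0. auto.
  eapply Rlt_le_trans; eauto; apply Rmin_r. Qed.

Lemma cdiff_invshift (z0 w : C) : w <> z0 -> exists l, cdiff (fun u => / (u - z0))%C w l.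
Proof. intros Hw. eexists. apply (cdiff_comp Cinv (fun u => u - z0)%C).
  apply (cdiff_plus (fun u => u) (fun _ => - z0)%C). apply cdiff_id. apply cdiff_const.
  apply cdiff_inv. intro E. apply Hw. replace w with ((w - z0) + z0)%C by ring. rewrite E. ring. Qed.

Lemma Cmod_sub_pos (w z0 : C) : w <> z0 -> 0 < Cmod (w - z0).
Proof. intros H. apply (proj1 (Cmod_gt_0 _)). intro E. apply H. replace w with ((w - z0) + z0)%C by ring.
  rewrite E. ring. Qed.

Definition qf F (z0 l0 : C) (u : C) : C := if Ceq_dec u z0 then l0 else ((F u - F z0) * / (u - z0))%C.

Lemma qf_cdiff F z0 l0 w l : w <> z0 -> cdiff F w l -> exists l', cdiff (qf F z0 l0) w l'.
Proof.
  intros Hw Hl. destruct (cdiff_invshift z0 w Hw) as [li Hi].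
  eexists. apply (cdiff_local _ (fun u => (F u - F z0) * / (u - z0))%C w _ (Cmod (w - z0))).
  apply (cdiff_mult (fun u => F u - F z0)%C (fun u => / (u - z0))%C).
  apply (cdiff_plus F (fun _ => - F z0)%C). exact Hl. apply cdiff_const. exact Hi.
  apply Cmod_sub_pos; auto.
  intros u Hu. unfold qf. destruct (Ceq_dec u z0) as [e|]; auto. subst u.
  replace (z0 - w)%C with (- (w - z0))%C in Hu by ring. rewrite Cmod_opp in Hu. lra.
Qed.

Lemma qf_cont F z0 l0 : cdiff F z0 l0 -> Ccont (qf F z0 l0) z0.
Proof.
  intros H eps He. destruct (H (eps / 2) ltac:(lra)) as [d [Hd Hw]]. exists d. split; auto.
  intros u Hu. unfold qf. destruct (Ceq_dec z0 z0) as [_|n]; [|congruence].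
  destruct (Ceq_dec u z0) as [e|n].
  - replace (l0 - l0)%C with (RtoC 0) by ring. rewrite Cmod_0; auto.
  - assert (P := Cmod_sub_pos u z0 n).
    assert (Hn : (u - z0)%C <> 0%C) by (intro E; rewrite E, Cmod_0 in P; lra).
    replace ((F u - F z0) * / (u - z0) - l0)%C with ((F u - F z0 - l0 * (u - z0)) * / (u - z0))%C
      by (field; auto).
    rewrite Cmod_mult, Cmod_inv by auto. specialize (Hw u Hu).
    apply (Rmult_le_compat_r (/ Cmod (u - z0))) in Hw; [| left; apply Rinv_0_lt_compat; auto].
    replace (eps / 2 * Cmod (u - z0) * / Cmod (u - z0)) with (eps / 2) in Hw by (field; lra). lra.
Qed.

Lemma pair_neq x y x0 y0 : x <> x0 \/ y <> y0 -> (x, y) <> (x0, y0) :> C.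
Proof. intros [H|H] E; inversion E; auto. Qed.


Lemma J_q_zero F a b c d x0 y0 l0 : a < x0 < b -> c < y0 < d ->
  (forall x y, a <= x <= b -> c <= y <= d -> exists l, cdiff F (x, y) l) ->
  cdiff F (x0, y0) l0 ->
  J (qf F (x0, y0) l0) a b c d = 0%C.
Proof.
  intros Hx Hy HF H0. set (z0 := (x0, y0) : C). set (q := qf F z0 l0).
  assert (Dq : forall x y, a <= x <= b -> c <= y <= d -> (x, y) <> z0 -> exists l, cdiff q (x, y) l).
  { intros x y hx hy hne. destruct (HF x y hx hy) as [l Hl]. eapply qf_cdiff; eauto. }
  assert (Gq : good q a b c d).
  { intros x y hx hy. destruct (Ceq_dec (x, y) z0) as [e|n].
    - rewrite e. apply qf_cont. exact H0.
    - destruct (Dq x y hx hy n) as [l Hl]. eapply cdiff_Ccont; eauto. }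
  destruct (qf_cont F z0 l0 H0 1 Rlt_0_1) as [d1 [Hd1 Hq1]]. fold q in Hq1.
  set (M := Cmod l0 + 1).
  assert (HqM : forall u, Cmod (u - z0) < d1 -> Cmod (q u) <= M).
  { intros u Hu. specialize (Hq1 u Hu). unfold q at 2, qf in Hq1.
    destruct (Ceq_dec z0 z0) as [_|n]; [|congruence].
    replace (q u) with ((q u - l0) + l0)%C by ring. eapply Rle_trans. apply Cmod_triangle. unfold M; lra. }
  set (dm := Rmin (Rmin (d1 / 4) (Rmin (x0 - a) (b - x0))) (Rmin (y0 - c) (d - y0))).
  assert (Hdm : 0 < dm).
  { unfold dm. repeat apply Rmin_pos; lra. }
  assert (Hdm1 : dm <= d1 / 4) by (unfold dm; eapply Rle_trans; [apply Rmin_l| apply Rmin_l]).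
  assert (Hdm2 : dm <= x0 - a /\ dm <= b - x0).
  { unfold dm. split; eapply Rle_trans; try apply Rmin_l; eapply Rle_trans; try apply Rmin_r; try apply Rmin_l; try apply Rmin_r. }
  assert (Hdm3 : dm <= y0 - c /\ dm <= d - y0).
  { unfold dm. split; eapply Rle_trans; try apply Rmin_r; try apply Rmin_l; apply Rmin_r. }
  assert (Key : forall del, 0 < del < dm -> Cmod (J q a b c d) <= 4 * M * (4 * del)).
  { intros del [Hd0 Hd].
    assert (Z1 : J q a (x0 - del) c d = 0%C).
    { apply goursat; try lra. intros x y hx hy. apply Dq; try lra. apply pair_neq; left; lra. }
    assert (Z2 : J q (x0 + del) b c d = 0%C).
    { apply goursat; try lra. intros x y hx hy. apply Dq; try lra. apply pair_neq; left; lra. }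
    assert (Z3 : J q (x0 - del) (x0 + del) c (y0 - del) = 0%C).
    { apply goursat; try lra. intros x y hx hy. apply Dq; try lra. apply pair_neq; right; lra. }
    assert (Z4 : J q (x0 - del) (x0 + del) (y0 + del) d = 0%C).
    { apply goursat; try lra. intros x y hx hy. apply Dq; try lra. apply pair_neq; right; lra. }
    rewrite (J_splitx q a (x0 - del) b c d) by (auto; lra).
    rewrite (J_splitx q (x0 - del) (x0 + del) b c d) by (try (eapply good_sub; eauto); lra).
    rewrite (J_splity q (x0 - del) (x0 + del) c (y0 - del) d) by (try (eapply good_sub; eauto); lra).
    rewrite (J_splity q (x0 - del) (x0 + del) (y0 - del) (y0 + del) d) by (try (eapply good_sub; eauto); lra).
    rewrite Z1, Z2, Z3, Z4.
    match goal with |- Cmod ?e <= _ => replace e with (J q (x0 - del) (x0 + del) (y0 - del) (y0 + del)) by ring end.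
    replace (4 * del) with (((x0 + del) - (x0 - del)) + ((y0 + del) - (y0 - del))) by ring.
    apply J_bound; try lra. eapply good_sub; eauto; lra.
    intros x y hx hy. apply HqM. eapply Rle_lt_trans. apply Cmod_le_sum. unfold z0, Re, Im; simpl.
    replace (x + - x0) with (x - x0) by ring. replace (y + - y0) with (y - y0) by ring.
    unfold Rabs; repeat destruct Rcase_abs; lra. }
  destruct (Req_dec (Cmod (J q a b c d)) 0) as [h|h]. apply Cmod_eq_0; auto.
  exfalso. pose proof (Cmod_ge_0 (J q a b c d)). set (X := Cmod (J q a b c d)) in *.
  assert (HM : 0 < M) by (unfold M; pose proof (Cmod_ge_0 l0); lra).
  set (del := Rmin (dm / 2) (X / (32 * M))).
  assert (0 < del) by (unfold del; apply Rmin_pos; [lra| apply Rdiv_lt_0_compat; lra]).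
  assert (del < dm) by (unfold del; eapply Rle_lt_trans; [apply Rmin_l| lra]).
  specialize (Key del (conj H1 H2)).
  assert (del <= X / (32 * M)) by apply Rmin_r.
  assert (del * (32 * M) <= X).
  { replace X with (X / (32 * M) * (32 * M)) by (field; lra). apply Rmult_le_compat_r; lra. }
  nra.
Qed.


Lemma qf_good F a b c d x0 y0 l0 : a < x0 < b -> c < y0 < d ->
  (forall x y, a <= x <= b -> c <= y <= d -> exists l, cdiff F (x, y) l) ->
  cdiff F (x0, y0) l0 -> good (qf F (x0, y0) l0) a b c d.
Proof.
  intros Hx Hy HF H0 x y hx hy. destruct (Ceq_dec (x, y) (x0, y0)) as [e|n].
  - rewrite e. apply qf_cont. exact H0.
  - destruct (HF x y hx hy) as [l Hl]. destruct (qf_cdiff F (x0, y0) l0 (x, y) l n Hl) as [l' Hl'].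
    eapply cdiff_Ccont; eauto.
Qed.

Lemma bd_neq a b c d x0 y0 : a < x0 < b -> c < y0 < d ->
  (forall x, (x, c) <> (x0, y0) :> C /\ (x, d) <> (x0, y0) :> C) /\
  (forall y, (a, y) <> (x0, y0) :> C /\ (b, y) <> (x0, y0) :> C).
Proof. intros. split; intros; split; apply pair_neq; lra. Qed.

Lemma bgood_cd F a b c d x0 y0 : a < x0 < b -> c < y0 < d ->
  (forall w, w <> (x0, y0) :> C -> (a <= Re w <= b) -> (c <= Im w <= d) -> exists l, cdiff F w l) ->
  bgood F a b c d.
Proof.
  intros Hx Hy H. destruct (bd_neq a b c d x0 y0 Hx Hy) as [B1 B2]. apply bgood_of.
  - intros x hx. split; [destruct (H (x, c)) as [l Hl] | destruct (H (x, d)) as [l Hl]];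
    try apply B1; simpl; try lra; eapply cdiff_Ccont; eauto.
  - intros y hy. split; [destruct (H (a, y)) as [l Hl] | destruct (H (b, y)) as [l Hl]];
    try apply B2; simpl; try lra; eapply cdiff_Ccont; eauto.
Qed.

Lemma cauchy F a b c d x0 y0 : a < x0 < b -> c < y0 < d ->
  (forall x y, a <= x <= b -> c <= y <= d -> exists l, cdiff F (x, y) l) ->
  J (fun w => F w * / (w - (x0, y0)))%C a b c d = (F (x0, y0) * J (fun w => / (w - (x0, y0)))%C a b c d)%C.
Proof.
  intros Hx Hy HF. set (z0 := (x0, y0) : C).
  destruct (HF x0 y0) as [l0 H0]; try lra.
  destruct (bd_neq a b c d x0 y0 Hx Hy) as [B1 B2].
  rewrite (J_ext_b _ (fun w => qf F z0 l0 w + F z0 * / (w - z0))%C).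
  2: { intros x hx. unfold qf. destruct (Ceq_dec (x, c) z0) as [e|_]. exfalso; apply (proj1 (B1 x)); auto.
       destruct (Ceq_dec (x, d) z0) as [e|_]. exfalso; apply (proj2 (B1 x)); auto. split; ring. }
  2: { intros y hy. unfold qf. destruct (Ceq_dec (a, y) z0) as [e|_]. exfalso; apply (proj1 (B2 y)); auto.
       destruct (Ceq_dec (b, y) z0) as [e|_]. exfalso; apply (proj2 (B2 y)); auto. split; ring. }
  2, 3: lra.
  assert (Ginv : bgood (fun w => / (w - z0))%C a b c d).
  { apply (bgood_cd _ a b c d x0 y0 Hx Hy). intros w hw _ _. apply cdiff_invshift; auto. }
  rewrite J_plus; try lra.
  - rewrite J_scal; auto; try lra. unfold z0. rewrite J_q_zero; auto. ring.
  - pose proof (qf_good F a b c d x0 y0 l0 Hx Hy HF H0) as G.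
    repeat split; eapply good_sub; eauto; lra.
  - apply (bgood_cd _ a b c d x0 y0 Hx Hy). intros w hw _ _. destruct (cdiff_invshift z0 w hw) as [li Hi].
    eexists. apply (cdiff_mult (fun _ => F z0) (fun w => / (w - z0))%C). apply cdiff_const. exact Hi.
Qed.

Lemma pair_sub x y x0 y0 : ((x, y) - (x0, y0))%C = (x - x0, y - y0).
Proof. unfold Cminus, Cplus, Copp; simpl. reflexivity. Qed.

Lemma inv_pair u v : (/ (u, v))%C = (u / (u ^ 2 + v ^ 2), - v / (u ^ 2 + v ^ 2)).
Proof. reflexivity. Qed.

Lemma frac_lb p S K : 0 <= p -> 0 < S -> S <= K -> p / K <= p / S.
Proof. intros. unfold Rdiv. apply Rmult_le_compat_l; auto. apply Rinv_le_contravar; auto. Qed.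

Lemma frac_nn p S : 0 <= p -> 0 < S -> 0 <= p / S.
Proof. intros. unfold Rdiv. apply Rmult_le_pos; auto. left; apply Rinv_0_lt_compat; auto. Qed.

Lemma W_pos a b c d x0 y0 : a < x0 < b -> c < y0 < d ->
  0 < Im (J (fun w => / (w - (x0, y0)))%C a b c d).
Proof.
  intros Hx Hy. set (z0 := (x0, y0) : C).
  assert (G : bgood (fun w => / (w - z0))%C a b c d).
  { apply (bgood_cd _ a b c d x0 y0 Hx Hy). intros w hw _ _. apply cdiff_invshift; auto. }
  destruct G as (G1 & G2 & G3 & G4).
  set (K := (b - a) ^ 2 + (d - c) ^ 2 + 1).
  assert (HK : 0 < K) by (unfold K; nra).
  set (kap := (y0 - c) / K).
  assert (Hkap : 0 < kap) by (unfold kap; apply Rdiv_lt_0_compat; lra).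
  change (0 < Jim (fun w => / (w - z0))%C a b c d). unfold Jim.
  assert (H1 : (b - a) * kap <= RInt (fun x => Im (/ ((x, c) - z0)) - Im (/ ((x, d) - z0))) a b).
  { rewrite <- rint_const. apply RInt_le. lra. apply ex_RInt_const.
    apply exr_minus. apply (ex_hor (fun w => / (w - z0))%C a b c c c Im PIm); auto; lra.
    apply (ex_hor (fun w => / (w - z0))%C a b d d d Im PIm); auto; lra.
    intros x hx. unfold z0. rewrite !pair_sub, !inv_pair. unfold Re, Im; cbn [fst snd].
    assert (S1 : 0 < (x - x0) ^ 2 + (c - y0) ^ 2) by (pose proof (pow2_ge_0 (x - x0)); assert (0 < y0 - c) by lra; simpl; nra).
    assert (S2 : 0 < (x - x0) ^ 2 + (d - y0) ^ 2) by (pose proof (pow2_ge_0 (x - x0)); assert (0 < d - y0) by lra; simpl; nra).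
    assert (S1K : (x - x0) ^ 2 + (c - y0) ^ 2 <= K) by (unfold K; simpl; nra).
    pose proof (frac_lb (y0 - c) _ _ ltac:(lra) S1 S1K).
    pose proof (frac_nn (d - y0) _ ltac:(lra) S2).
    unfold kap. replace (- (c - y0) / ((x - x0) ^ 2 + (c - y0) ^ 2)) with ((y0 - c) / ((x - x0) ^ 2 + (c - y0) ^ 2)) by (field; lra).
    replace (- (d - y0) / ((x - x0) ^ 2 + (d - y0) ^ 2)) with (- ((d - y0) / ((x - x0) ^ 2 + (d - y0) ^ 2))) by (field; lra).
    lra. }
  assert (H2 : 0 <= RInt (fun y => Re (/ ((b, y) - z0)) - Re (/ ((a, y) - z0))) c d).
  { apply RInt_ge_0. lra.
    apply exr_minus. apply (ex_ver (fun w => / (w - z0))%C b b c d b Re PRe); auto; lra.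
    apply (ex_ver (fun w => / (w - z0))%C a a c d a Re PRe); auto; lra.
    intros y hy. unfold z0. rewrite !pair_sub, !inv_pair. unfold Re, Im; cbn [fst snd].
    assert (S1 : 0 < (b - x0) ^ 2 + (y - y0) ^ 2) by (pose proof (pow2_ge_0 (y - y0)); assert (0 < b - x0) by lra; simpl; nra).
    assert (S2 : 0 < (a - x0) ^ 2 + (y - y0) ^ 2) by (pose proof (pow2_ge_0 (y - y0)); assert (0 < x0 - a) by lra; simpl; nra).
    pose proof (frac_nn (b - x0) _ ltac:(lra) S1).
    pose proof (frac_nn (x0 - a) _ ltac:(lra) S2).
    replace ((a - x0) / ((a - x0) ^ 2 + (y - y0) ^ 2)) with (- ((x0 - a) / ((a - x0) ^ 2 + (y - y0) ^ 2))) by (field; lra).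
    lra. }
  nra.
Qed.

Lemma bernoulli h n : 0 <= h -> 1 + INR n * h <= (1 + h) ^ n.
Proof. intros Hh. induction n. simpl; lra. rewrite S_INR. simpl.
  assert (0 <= INR n * h) by (apply Rmult_le_pos; auto; apply pos_INR). nra. Qed.

Lemma pow_le1 t n : 0 <= t <= 1 -> t ^ n <= 1.
Proof. intros H. induction n. simpl; lra. simpl. assert (0 <= t ^ n) by (apply pow_le; lra). nra. Qed.

Lemma maxmod F a b c d x0 y0 : a < x0 < b -> c < y0 < d ->
  (forall x y, a <= x <= b -> c <= y <= d -> exists l, cdiff F (x, y) l) ->
  (forall x, a <= x <= b -> Cmod (F (x, c)) <= 1 /\ Cmod (F (x, d)) <= 1) ->
  (forall y, c <= y <= d -> Cmod (F (a, y)) <= 1 /\ Cmod (F (b, y)) <= 1) ->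
  Cmod (F (x0, y0)) <= 1.
Proof.
  intros Hx Hy HF B1 B2. set (z0 := (x0, y0) : C).
  set (rho := Rmin (Rmin (x0 - a) (b - x0)) (Rmin (y0 - c) (d - y0))).
  assert (Hrho : 0 < rho) by (unfold rho; repeat apply Rmin_pos; lra).
  assert (R1 : rho <= x0 - a /\ rho <= b - x0 /\ rho <= y0 - c /\ rho <= d - y0).
  { unfold rho. repeat split.
    - eapply Rle_trans; [apply Rmin_l| apply Rmin_l].
    - eapply Rle_trans; [apply Rmin_l| apply Rmin_r].
    - eapply Rle_trans; [apply Rmin_r| apply Rmin_l].
    - eapply Rle_trans; [apply Rmin_r| apply Rmin_r]. }
  set (W := J (fun w => / (w - z0))%C a b c d).
  assert (HW : 0 < Cmod W).
  { pose proof (W_pos a b c d x0 y0 Hx Hy). fold z0 W in H. pose proof (im_le_Cmod W).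
    unfold Rabs in H0; destruct Rcase_abs in H0; lra. }
  set (K0 := 4 * / rho * ((b - a) + (d - c))).
  assert (Bn : forall n, Cmod (F z0) ^ n * Cmod W <= K0).
  { intros n.
    assert (HFn : forall x y, a <= x <= b -> c <= y <= d -> exists l, cdiff (fun w => F w ^ n)%C (x, y) l).
    { intros x y hx hy. destruct (HF x y hx hy) as [l Hl]. eapply cdiff_pow; eauto. }
    pose proof (cauchy (fun w => F w ^ n)%C a b c d x0 y0 Hx Hy HFn) as E. fold z0 W in E.
    rewrite <- Cmod_pow, <- Cmod_mult. change (F (x0, y0)) with (F z0) in E. rewrite <- E.
    assert (Gen : forall w, Cmod (F w) <= 1 -> rho <= Cmod (w - z0) -> Cmod (F w ^ n * / (w - z0)) <= / rho).
      { intros w h1 h2. assert (w - z0 <> 0)%C by (intro E0; rewrite E0, Cmod_0 in h2; lra).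
        rewrite Cmod_mult, Cmod_pow, Cmod_inv by auto.
        assert (Cmod (F w) ^ n <= 1) by (apply pow_le1; split; auto; apply Cmod_ge_0).
        assert (/ Cmod (w - z0) <= / rho) by (apply Rinv_le_contravar; auto).
        assert (0 <= Cmod (F w) ^ n) by (apply pow_le; apply Cmod_ge_0).
        assert (0 < / Cmod (w - z0)) by (apply Rinv_0_lt_compat; lra). nra. }
    unfold K0. apply J_bound_b; try lra.
    - apply (bgood_cd _ a b c d x0 y0 Hx Hy). intros w hw h1 h2.
      destruct w as [x y]. simpl in h1, h2. destruct (HFn x y h1 h2) as [l Hl].
      destruct (cdiff_invshift z0 (x, y) hw) as [li Hi].
      eexists. apply (cdiff_mult (fun w => F w ^ n)%C (fun w => / (w - z0))%C); eauto.
    - intros x hx. destruct (B1 x hx). split; apply Gen; auto.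
      + eapply Rle_trans; [|apply im_le_Cmod]. unfold z0. rewrite pair_sub. simpl.
        rewrite Rabs_left by lra. lra.
      + eapply Rle_trans; [|apply im_le_Cmod]. unfold z0. rewrite pair_sub. simpl.
        rewrite Rabs_right by lra. lra.
    - intros y hy. destruct (B2 y hy). split; apply Gen; auto.
      + eapply Rle_trans; [|apply re_le_Cmod]. unfold z0. rewrite pair_sub. simpl.
        rewrite Rabs_left by lra. lra.
      + eapply Rle_trans; [|apply re_le_Cmod]. unfold z0. rewrite pair_sub. simpl.
        rewrite Rabs_right by lra. lra. }
  destruct (Rle_dec (Cmod (F z0)) 1) as [h|h]; auto.
  exfalso. set (hh := Cmod (F z0) - 1). assert (Hh : 0 < hh) by (unfold hh; lra).
  destruct (archimed_cor1 (hh * Cmod W / (K0 + 1))) as [N [HN HN0]].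
  { apply Rdiv_lt_0_compat. nra. unfold K0. assert (0 < / rho) by (apply Rinv_0_lt_compat; lra). nra. }
  specialize (Bn N). pose proof (bernoulli hh N (Rlt_le _ _ Hh)).
  replace (1 + hh) with (Cmod (F z0)) in H by (unfold hh; ring).
  assert (HK0 : 0 <= K0) by (unfold K0; assert (0 < / rho) by (apply Rinv_0_lt_compat; lra); nra).
  assert (HNp : 0 < INR N) by (apply lt_0_INR; lia).
  assert (INR N * hh * Cmod W > K0).
  { assert (/ INR N * (K0 + 1) < hh * Cmod W).
    { apply (Rmult_lt_compat_r (K0 + 1)) in HN; [|lra].
      replace (hh * Cmod W / (K0 + 1) * (K0 + 1)) with (hh * Cmod W) in HN by (field; lra). lra. }
    apply (Rmult_lt_compat_l (INR N)) in H0; auto.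
    rewrite <- Rmult_assoc, Rinv_r in H0 by lra. nra. }
  nra.
Qed.


Lemma is_derive_cdiffC f z l : @is_derive C_AbsRing C_NormedModule f z l -> cdiff f z l.
Proof.
  intros [_ H] eps Heps.
  assert (Hz : is_filter_lim (locally z) z) by (intros P HP; exact HP).
  specialize (H z Hz (mkposreal eps Heps)).
  apply (locally_le_locally_norm (K:=C_AbsRing) (V:=AbsRing_NormedModule C_AbsRing)) in H. destruct H as [d Hd].
  exists d. split. apply cond_pos. intros w Hw.
  specialize (Hd w Hw). simpl in Hd.
  replace (f w - f z - l * (w - z))%C with (minus (minus (f w) (f z)) (scal (minus w z) l)).
  exact Hd.
  unfold minus, plus, opp, scal; simpl. unfold mult; simpl. ring.
Qed.

Lemma exp_mono x y : x <= y -> exp x <= exp y.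
Proof. intros H. destruct (Rle_lt_or_eq_dec _ _ H). left; apply exp_increasing; auto. subst; lra. Qed.

Lemma cexp_Omega Rr s t : 1 < Rr -> 0 <= s <= ln Rr -> 0 <= t <= PI -> Omega Rr (cexp (s, t)).
Proof.
  intros HR Hs Ht. unfold Omega. rewrite Cmod_cexp. simpl. split; [split|].
  - rewrite <- exp_0. apply exp_mono; lra.
  - rewrite <- (exp_ln Rr) by lra. apply exp_mono; lra.
  - unfold cexp; simpl. apply Rmult_le_pos. left; apply exp_pos. apply sin_ge_0; lra.
Qed.

Lemma h_bounds (u : C) A : 0 < A -> Re u <= A ->
  A <= Cmod (RtoC (2 * A) - u) /\ Cmod u <= Cmod (RtoC (2 * A) - u).
Proof.
  intros HA Hu. split.
  - eapply Rle_trans; [|apply re_le_Cmod]. rewrite Re_minus. simpl. unfold Rabs; destruct Rcase_abs; lra.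
  - destruct u as [u1 u2]. simpl in Hu. unfold Cmod. apply sqrt_le_1_alt. simpl. nra.
Qed.

Theorem lemma2p1 (Rr : R) (f : C -> C) (rho C0 M Mre : R) :
  1 < Rr ->
  analytic_near f (Omega Rr) ->
  0 < rho -> 0 < C0 ->
  (forall x : R, Omega Rr (RtoC x) -> Cmod (f (RtoC x)) <= C0 * Rpower (Rabs x) rho) ->
  is_max_on (fun z => Omega Rr z /\ Cmod z = 1) (fun z => Cmod (f z)) M ->
  is_max_on (Omega Rr) (fun z => Re (f z)) Mre ->
  forall (r : R) (z : C), 1 < r < Rr -> Omega Rr z -> Cmod z = r ->
    Cmod (f z) <=
      2 * Rpower r rho / (Rpower Rr rho - Rpower r rho) *
      Rmax (C0 * Rpower Rr rho) (Rmax (M * Rpower Rr rho) Mre).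
Proof.
  intros HR Han Hrho HC0 Hreal HM HMre r z Hr Hz Hzr.
  assert (Hf : forall z, Omega Rr z -> exists l, cdiff f z l).
  { intros w Hw. destruct Han as [U [_ [HSU HUd]]]. destruct (HUd w (HSU w Hw)) as [l Hl].
    exists l. apply is_derive_cdiffC. exact Hl. }
  set (Rp := Rpower Rr rho).
  assert (HRp : 0 < Rp) by (unfold Rp, Rpower; apply exp_pos).
  set (A := Rmax (C0 * Rp) (Rmax (M * Rp) Mre)).
  assert (HA1 : C0 * Rp <= A) by apply Rmax_l.
  assert (HA2 : M * Rp <= A) by (eapply Rle_trans; [apply Rmax_l| apply Rmax_r]).
  assert (HA3 : Mre <= A) by (eapply Rle_trans; [apply Rmax_r| apply Rmax_r]).
  assert (HA : 0 < A) by (assert (0 < C0 * Rp) by (apply Rmult_lt_0_compat; auto); lra).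
  destruct HM as [[zm [[Hzm1 Hzm2] Ezm]] HMb].
  assert (HM0 : 0 <= M) by (rewrite <- Ezm; apply Cmod_ge_0).
  destruct HMre as [_ HMreb].
  assert (HReA : forall w, Omega Rr w -> Re (f w) <= A) by (intros w Hw; specialize (HMreb w Hw); simpl in HMreb; lra).
  set (h := fun w => (f w * / (RtoC (2 * A) - f w))%C).
  assert (Hh : forall w, Omega Rr w -> Cmod (h w) <= 1 /\ Cmod (h w) <= Cmod (f w) / A /\
                 (RtoC (2 * A) - f w)%C <> 0%C).
  { intros w Hw. destruct (h_bounds (f w) A HA (HReA w Hw)) as [B1 B2].
    assert (NZ : (RtoC (2 * A) - f w)%C <> 0%C) by (intro E; rewrite E, Cmod_0 in B1; lra).
    unfold h. rewrite Cmod_mult, Cmod_inv by auto.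
    assert (P : 0 < Cmod (RtoC (2 * A) - f w)) by lra.
    split; [|split; auto].
    - apply (Rmult_le_reg_r (Cmod (RtoC (2 * A) - f w))); auto. rewrite Rmult_assoc, Rinv_l by lra. lra.
    - unfold Rdiv. apply Rmult_le_compat_l. apply Cmod_ge_0. apply Rinv_le_contravar; auto. }
  set (k := RtoC (rho * ln Rr)).
  set (G := fun w => (h (cexp w) * cexp (k - RtoC rho * w))%C).
  assert (HlnR : 0 < ln Rr) by (rewrite <- ln_1; apply ln_increasing; lra).
  assert (HG : forall s t, Cmod (G (s, t)) = Cmod (h (cexp (s, t))) * exp (rho * ln Rr - rho * s)).
  { intros s t. unfold G. rewrite Cmod_mult, Cmod_cexp. f_equal. f_equal. unfold k; simpl. ring. }
  assert (DG : forall x y, 0 <= x <= ln Rr -> 0 <= y <= PI -> exists l, cdiff G (x, y) l).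
  { intros x y hx hy. pose proof (cexp_Omega Rr x y HR hx hy) as HO.
    destruct (Hf _ HO) as [lf Hlf]. destruct (Hh _ HO) as (_ & _ & NZ).
    assert (D1 : cdiff (fun w => f (cexp w)) (x, y) (cexp (x, y) * lf)%C).
    { apply (cdiff_comp f cexp). apply cdiff_cexp. exact Hlf. }
    assert (D2 : exists l2, cdiff (fun w => / (RtoC (2 * A) - f (cexp w)))%C (x, y) l2).
    { eexists. apply (cdiff_comp Cinv (fun w => RtoC (2 * A) - f (cexp w))%C).
      apply (cdiff_plus (fun _ => RtoC (2 * A)) (fun w => - f (cexp w))%C). apply cdiff_const.
      apply (cdiff_opp (fun w => f (cexp w))). exact D1. apply cdiff_inv. exact NZ. }
    destruct D2 as [l2 D2].
    assert (D3 : exists l3, cdiff (fun w => cexp (k - RtoC rho * w))%C (x, y) l3).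
    { eexists. apply (cdiff_comp cexp (fun w => k - RtoC rho * w)%C).
      apply (cdiff_plus (fun _ => k) (fun w => - (RtoC rho * w))%C). apply cdiff_const.
      apply (cdiff_opp (fun w => RtoC rho * w)%C). apply (cdiff_mult (fun _ => RtoC rho) (fun w => w)).
      apply cdiff_const. apply cdiff_id. apply cdiff_cexp. }
    destruct D3 as [l3 D3].
    eexists. unfold G, h.
    apply (cdiff_mult (fun w => f (cexp w) * / (RtoC (2 * A) - f (cexp w)))%C (fun w => cexp (k - RtoC rho * w))%C).
    apply (cdiff_mult (fun w => f (cexp w)) (fun w => / (RtoC (2 * A) - f (cexp w)))%C); eauto. exact D3. }
  assert (HGf : forall s t, 0 <= s <= ln Rr -> 0 <= t <= PI ->
     Cmod (f (cexp (s, t))) <= C0 * exp (rho * s) -> Cmod (G (s, t)) <= 1).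
  { intros s t hs ht hf. rewrite HG. pose proof (cexp_Omega Rr s t HR hs ht) as HO.
    destruct (Hh _ HO) as (_ & H2 & _).
    assert (E : exp (rho * s) * exp (rho * ln Rr - rho * s) = Rp) by
      (unfold Rp, Rpower; rewrite <- exp_plus; f_equal; ring).
    pose proof (exp_pos (rho * ln Rr - rho * s)).
    apply Rle_trans with (C0 * exp (rho * s) / A * exp (rho * ln Rr - rho * s)).
    apply Rmult_le_compat_r. lra. eapply Rle_trans. apply H2. unfold Rdiv.
    apply Rmult_le_compat_r. left; apply Rinv_0_lt_compat; lra. exact hf.
    replace (C0 * exp (rho * s) / A * exp (rho * ln Rr - rho * s)) with (C0 * Rp / A) by (rewrite <- E; field; lra).
    apply (Rmult_le_reg_r A); auto. unfold Rdiv. rewrite Rmult_assoc, Rinv_l by lra. lra. }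
  assert (BX : forall x, 0 <= x <= ln Rr -> Cmod (G (x, 0)) <= 1 /\ Cmod (G (x, PI)) <= 1).
  { intros x hx. assert (HPI := PI_RGT_0). split; apply HGf; try lra.
    - assert (E : cexp (x, 0) = RtoC (exp x)) by (unfold cexp, RtoC; simpl; rewrite cos_0, sin_0; f_equal; ring).
      pose proof (cexp_Omega Rr x 0 HR hx ltac:(lra)) as HO. rewrite E in HO |- *.
      eapply Rle_trans. apply Hreal; auto. unfold Rpower. rewrite Rabs_right by (left; apply exp_pos).
      rewrite ln_exp. lra.
    - assert (E : cexp (x, PI) = RtoC (- exp x)) by (unfold cexp, RtoC; simpl; rewrite cos_PI, sin_PI; f_equal; ring).
      pose proof (cexp_Omega Rr x PI HR hx ltac:(lra)) as HO. rewrite E in HO |- *.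
      eapply Rle_trans. apply Hreal; auto. unfold Rpower. rewrite Rabs_Ropp, Rabs_right by (left; apply exp_pos).
      rewrite ln_exp. lra. }
  assert (BY : forall y, 0 <= y <= PI -> Cmod (G (0, y)) <= 1 /\ Cmod (G (ln Rr, y)) <= 1).
  { intros y hy. split.
    - rewrite HG. pose proof (cexp_Omega Rr 0 y HR ltac:(lra) hy) as HO.
      destruct (Hh _ HO) as (_ & H2 & _).
      assert (Cmod (f (cexp (0, y))) <= M) by (apply HMb; split; auto; rewrite Cmod_cexp; simpl; apply exp_0).
      replace (exp (rho * ln Rr - rho * 0)) with Rp by (unfold Rp, Rpower; f_equal; ring).
      apply Rle_trans with (M / A * Rp). apply Rmult_le_compat_r. lra. eapply Rle_trans. apply H2.
      unfold Rdiv. apply Rmult_le_compat_r. left; apply Rinv_0_lt_compat; lra. auto.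
      replace (M / A * Rp) with (M * Rp / A) by (field; lra).
      apply (Rmult_le_reg_r A); auto. unfold Rdiv. rewrite Rmult_assoc, Rinv_l by lra. lra.
    - rewrite HG. pose proof (cexp_Omega Rr (ln Rr) y HR ltac:(lra) hy) as HO.
      destruct (Hh _ HO) as (H1 & _ & _).
      replace (rho * ln Rr - rho * ln Rr) with 0 by ring. rewrite exp_0. lra. }
  assert (HGall : forall s t, 0 < s < ln Rr -> 0 <= t <= PI -> Cmod (G (s, t)) <= 1).
  { intros s t hs ht. destruct (Rle_lt_or_eq_dec 0 t (proj1 ht)) as [t1|t1].
    - destruct (Rle_lt_or_eq_dec t PI (proj2 ht)) as [t2|t2].
      + apply (maxmod G 0 (ln Rr) 0 PI s t); auto.
      + subst t. apply BX; lra.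
    - subst t. apply BX; lra. }
  destruct z as [x y]. destruct Hz as [[Hz1 Hz2] Hy]. simpl in Hy.
  assert (Hr0 : 0 < r) by lra.
  assert (Hxr : -1 <= x / r <= 1).
  { pose proof (re_le_Cmod (x, y)) as Hre. simpl in Hre. rewrite Hzr in Hre.
    apply Rabs_le_between in Hre. split.
    - apply (Rmult_le_reg_r r); auto. unfold Rdiv. rewrite Rmult_assoc, Rinv_l by lra. lra.
    - apply (Rmult_le_reg_r r); auto. unfold Rdiv. rewrite Rmult_assoc, Rinv_l by lra. lra. }
  set (t := acos (x / r)).
  assert (Ez : cexp (ln r, t) = (x, y)).
  { unfold cexp; simpl. rewrite exp_ln by lra. unfold t. rewrite cos_acos, sin_acos by auto. f_equal.
    - field. lra.
    - apply Rsqr_inj; auto. apply Rmult_le_pos. lra. apply sqrt_pos.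
      rewrite Rsqr_mult, Rsqr_sqrt.
      2: { unfold Rsqr. apply (Rmult_le_reg_r (r * r)). nra. rewrite Rmult_0_l.
           replace ((1 - x / r * (x / r)) * (r * r)) with (r * r - x * x) by (field; lra).
           rewrite <- Hzr. pose proof (Cmod2_alt (x, y)) as C2. simpl in C2. simpl. nra. }
      unfold Rsqr. pose proof (Cmod2_alt (x, y)) as C2. simpl in C2. rewrite Hzr in C2.
      replace (r * r * (1 - x / r * (x / r))) with (r * r - x * x) by (field; lra).
      nra. }
  assert (Hlnr : 0 < ln r < ln Rr) by (split; [rewrite <- ln_1; apply ln_increasing; lra | apply ln_increasing; lra]).
  assert (Ht : 0 <= t <= PI) by apply acos_bound.
  pose proof (HGall (ln r) t Hlnr Ht) as HG1. rewrite HG, Ez in HG1.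
  set (tau := Rpower r rho / Rp).
  assert (Htau : Cmod (h (x, y)) <= tau).
  { unfold tau, Rp, Rpower.
    replace (exp (rho * ln r) / exp (rho * ln Rr)) with (/ exp (rho * ln Rr - rho * ln r)).
    apply (Rmult_le_reg_r (exp (rho * ln Rr - rho * ln r))). apply exp_pos.
    rewrite Rinv_l by (apply Rgt_not_eq, exp_pos). exact HG1.
    rewrite <- exp_Ropp. unfold Rdiv. rewrite <- exp_Ropp, <- exp_plus. f_equal. ring. }
  assert (Htau1 : Rpower r rho < Rp) by (unfold Rp, Rpower; apply exp_increasing; nra).
  assert (Hrp : 0 < Rpower r rho) by (unfold Rpower; apply exp_pos).
  pose proof (cexp_Omega Rr (ln r) t HR ltac:(lra) Ht) as HO. rewrite Ez in HO.
  destruct (Hh _ HO) as (_ & _ & NZ).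
  assert (Ef : (f (x, y) * (1 + h (x, y)) = RtoC (2 * A) * h (x, y))%C).
  { unfold h. field. exact NZ. }
  assert (Hf1 : Cmod (f (x, y)) * (1 - Cmod (h (x, y))) <= 2 * A * Cmod (h (x, y))).
  { assert (Cmod (f (x, y) * (1 + h (x, y))) = 2 * A * Cmod (h (x, y))).
    { rewrite Ef, Cmod_mult, Cmod_R, Rabs_right by lra. reflexivity. }
    rewrite Cmod_mult in H.
    assert (1 - Cmod (h (x, y)) <= Cmod (1 + h (x, y))).
    { pose proof (Cmod_triangle (1 + h (x, y)) (- h (x, y))). rewrite Cmod_opp in H0.
      replace (1 + h (x, y) + - h (x, y))%C with (RtoC 1) in H0 by ring. rewrite Cmod_1 in H0. lra. }
    pose proof (Cmod_ge_0 (f (x, y))). nra. }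
  assert (Htl : tau < 1).
  { unfold tau. apply (Rmult_lt_reg_r Rp); auto. unfold Rdiv. rewrite Rmult_assoc, Rinv_l by lra. lra. }
  pose proof (Cmod_ge_0 (f (x, y))). pose proof (Cmod_ge_0 (h (x, y))).
  assert (Hf2 : Cmod (f (x, y)) * (1 - tau) <= 2 * A * tau) by nra.
  change (Cmod (f (x, y)) <= 2 * Rpower r rho / (Rp - Rpower r rho) * A).
  replace (2 * Rpower r rho / (Rp - Rpower r rho) * A) with (2 * A * tau / (1 - tau))
    by (unfold tau; field; split; lra).
  apply (Rmult_le_reg_r (1 - tau)). lra. unfold Rdiv. rewrite Rmult_assoc, Rinv_l by lra. lra.
Qed.
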